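(* If $\mathcal{O}$ is a decomposable set of Scott-open modalities, then the open extension of the relation of applicative $\mathcal{O}$-similarity is compatible.
   Context: Language: types $\tau ::= \mathbf{1} \mid \mathbf{N} \mid \tau \to \tau'$; signature $\Sigma$ of effect operations with arities $\alpha^n\to\alpha$, $\mathbf{N}\times\alpha^n\to\alpha$, $\alpha^{\mathbf{N}}\to\alpha$ or $\mathbf{N}\times\alpha^{\mathbf{N}}\to\alpha$. Values $V ::= * \mid Z \mid S(V) \mid \lambda x{:}\tau.M \mid x$; computations $M ::= VW \mid \mathbf{return}\,V \mid \mathbf{let}\ M\Rightarrow x\ \mathbf{in}\ N \mid \mathbf{fix}(V) \mid \mathbf{case}\ V\ \mathbf{of}\ \{Z\Rightarrow M; S(x)\Rightarrow N\} \mid \sigma(M_0,\dots) \mid \sigma(V;M_0,\dots) \mid \sigma(V)\mid\sigma(V;W)$, simply typed call-by-value. $\mathit{Val}(\tau)$, $\mathit{Com}(\tau)$: closed values/computations. Effect trees $TX$: possibly infinite trees with leaves $\bot$ or elements of $X$ and internal nodes labelled by effect operations (or $\sigma_m$, $m\in\mathbb{N}$) with $n$ or $\mathbb{N}$-many children according to arity; $t\le t'$ iff $t$ results from $t'$ by replacing subtrees with $\bot$ ($\omega$-cpo). $\mu:TTX\to TX$ flattens trees of trees. Each $M\in\mathit{Com}(\tau)$ has an operational effect tree $|M|\in T(\mathit{Val}(\tau))$ from call-by-value evaluation. Modalities: set $\mathcal{O}$, $[\![o]\!]\subseteq T\mathbf{1}$; $t[\in P]$ replaces leaves in $P$ by $*$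 and others by $\bot$; $o(A)=\{t\mid t[\in A]\in[\![o]\!]\}$. Scott-open: $[\![o]\!]$ upward closed, and if the supremum of an ascending chain lies in $[\![o]\!]$ then some chain element does. Decomposability: $\mathcal{T}$ is the least class containing $o(\top),o(\bot)$ ($o\in\mathcal{O}$) closed under arbitrary $\bigvee,\bigwedge$, with $[\![o(\top)]\!]=o(\{*\})$, $[\![o(\bot)]\!]=o(\emptyset)$. $t\trianglelefteq t'$ on $T\mathbf{1}$ iff $\forall\Phi\in\mathcal{T}$, $t\in[\![\Phi]\!]\Rightarrow t'\in[\![\Phi]\!]$; $r\preccurlyeq r'$ on $TT\mathbf{1}$ iff $\forall o\,\forall\Phi\in\mathcal{T}$, $r\in o([\![\Phi]\!])\Rightarrow r'\in o([\![\Phi]\!])$. $\mathcal{O}$ is decomposable if $r\preccurlyeq r'$ implies $\mu r\trianglelefteq\mu r'$. Similarity: $t\,\mathcal{O}(R)\,t'$ iff $\forall A\,\forall o$, $t\in o(A)\Rightarrow t'\in o(R[A])$ where $R[A]=\{y\mid\exists x\in A, xRy\}$. An applicative $\mathcal{O}$-simulation is a family $R^v_\tau\subseteq\mathit{Val}(\tau)^2$, $R^c_\tau\subseteq\mathit{Com}(\tau)^2$ with (1) $V R^v_{\mathbf{N}}W\Rightarrow V=W$; (2) $MR^c_\tau N\Rightarrow|M|\,\mathcal{O}(R^v_\tau)\,|N|$; (3) $VR^v_{\tau'\to\tau}W\Rightarrow\forall U\in\mathit{Val}(\tau')$, $VU\,R^c_\tau\,WU$; applicative $\mathcal{O}$-similarity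 is the union of all of them. Open extension / compatibility: $\Gamma\vdash M\,R^\circ\,N$ iff $M[\vec V/\vec x]\,R\,N[\vec V/\vec x]$ for all closed value instantiations of $\Gamma$; an open relation is compatible if it relates each variable to itself and is closed under every term constructor (terms built by the same constructor from related immediate subterms are related). *)

(* Defs.v *)
From Stdlib Require Import List Arith ClassicalEpsilon.
Import ListNotations.

Inductive ty : Type := TUnit | TNat | TArr (a b : ty).

(* arities: alpha^n -> alpha, N x alpha^n -> alpha, alpha^N -> alpha, N x alpha^N -> alpha *)
Inductive arity : Type := AFin (n : nat) | APFin (n : nat) | ACount | APCount.

Section Lang.
Variable Op : Type.
Variable ar : Op -> arity.

(* de Bruijn syntax; variable n refers to the n-th entry of the context *)
Inductive val : Type :=
  | VStar | VZ | VS (v : val) | VLam (t : ty) (M : comp) | VVar (n : nat)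
with comp : Type :=
  | CApp (v w : val)
  | CRet (v : val)
  | CLet (M N : comp)              (* let M => x in N ; N binds x *)
  | CFix (v : val)
  | CCase (v : val) (M N : comp)   (* case v of {Z => M; S(x) => N}; N binds x *)
  | COp (s : Op) (Ms : list comp)
  | COpP (s : Op) (v : val) (Ms : list comp)
  | COpC (s : Op) (v : val)
  | COpPC (s : Op) (v w : val).

Definition upren (xi : nat -> nat) : nat -> nat :=
  fun n => match n with 0 => 0 | S k => S (xi k) end.

Fixpoint ren_v (xi : nat -> nat) (v : val) : val :=
  match v with
  | VStar => VStar | VZ => VZ | VS v => VS (ren_v xi v)
  | VLam t M => VLam t (ren_c (upren xi) M)
  | VVar n => VVar (xi n)
  end
with ren_c (xi : nat -> nat) (M : comp) : comp :=
  match M with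
  | CApp v w => CApp (ren_v xi v) (ren_v xi w)
  | CRet v => CRet (ren_v xi v)
  | CLet M N => CLet (ren_c xi M) (ren_c (upren xi) N)
  | CFix v => CFix (ren_v xi v)
  | CCase v M N => CCase (ren_v xi v) (ren_c xi M) (ren_c (upren xi) N)
  | COp s Ms => COp s (map (ren_c xi) Ms)
  | COpP s v Ms => COpP s (ren_v xi v) (map (ren_c xi) Ms)
  | COpC s v => COpC s (ren_v xi v)
  | COpPC s v w => COpPC s (ren_v xi v) (ren_v xi w)
  end.

Definition upsub (sg : nat -> val) : nat -> val :=
  fun n => match n with 0 => VVar 0 | S k => ren_v S (sg k) end.

Fixpoint sub_v (sg : nat -> val) (v : val) : val :=
  match v with
  | VStar => VStar | VZ => VZ | VS v => VS (sub_v sg v)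
  | VLam t M => VLam t (sub_c (upsub sg) M)
  | VVar n => sg n
  end
with sub_c (sg : nat -> val) (M : comp) : comp :=
  match M with
  | CApp v w => CApp (sub_v sg v) (sub_v sg w)
  | CRet v => CRet (sub_v sg v)
  | CLet M N => CLet (sub_c sg M) (sub_c (upsub sg) N)
  | CFix v => CFix (sub_v sg v)
  | CCase v M N => CCase (sub_v sg v) (sub_c sg M) (sub_c (upsub sg) N)
  | COp s Ms => COp s (map (sub_c sg) Ms)
  | COpP s v Ms => COpP s (sub_v sg v) (map (sub_c sg) Ms)
  | COpC s v => COpC s (sub_v sg v)
  | COpPC s v w => COpPC s (sub_v sg v) (sub_v sg w)
  end.

Definition subst0 (M : comp) (V : val) : comp :=
  sub_c (fun n => match n with 0 => V | S k => VVar k end) M.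

Definition inst (sg : list val) : nat -> val := fun n => nth n sg (VVar n).

Inductive tyv : list ty -> val -> ty -> Prop :=
  | ty_star G : tyv G VStar TUnit
  | ty_zero G : tyv G VZ TNat
  | ty_succ G v : tyv G v TNat -> tyv G (VS v) TNat
  | ty_lam G t r M : tyc (t :: G) M r -> tyv G (VLam t M) (TArr t r)
  | ty_var G n t : nth_error G n = Some t -> tyv G (VVar n) t
with tyc : list ty -> comp -> ty -> Prop :=
  | ty_app G t r v w : tyv G v (TArr t r) -> tyv G w t -> tyc G (CApp v w) r
  | ty_ret G t v : tyv G v t -> tyc G (CRet v) t
  | ty_let G t r M N : tyc G M t -> tyc (t :: G) N r -> tyc G (CLet M N) r
  | ty_fix G t r v : tyv G v (TArr (TArr t r) (TArr t r)) -> tyc G (CFix v) (TArr t r)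
  | ty_case G t v M N : tyv G v TNat -> tyc G M t -> tyc (TNat :: G) N t ->
      tyc G (CCase v M N) t
  | ty_op G t s Ms : ar s = AFin (length Ms) -> (forall M, In M Ms -> tyc G M t) ->
      tyc G (COp s Ms) t
  | ty_opP G t s v Ms : ar s = APFin (length Ms) -> tyv G v TNat ->
      (forall M, In M Ms -> tyc G M t) -> tyc G (COpP s v Ms) t
  | ty_opC G t s v : ar s = ACount -> tyv G v (TArr TNat t) -> tyc G (COpC s v) t
  | ty_opPC G t s v w : ar s = APCount -> tyv G v TNat -> tyv G w (TArr TNat t) ->
      tyc G (COpPC s v w) t.

(* a path is the list of child indices from the root; LAbs = position not in the tree *)
Inductive label (X : Type) : Type :=
  | LAbs | LBot | LLeaf (x : X) | LNode (s : Op) (m : option nat).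
Arguments LAbs {X}. Arguments LBot {X}. Arguments LLeaf {X} x. Arguments LNode {X} s m.

Definition rtree (X : Type) : Type := list nat -> label X.

Definition nchildren (s : Op) : option nat :=
  match ar s with AFin n | APFin n => Some n | _ => None end.
Definition is_param (s : Op) : bool :=
  match ar s with APFin _ | APCount => true | _ => false end.
Definition valid_child (s : Op) (i : nat) : bool :=
  match nchildren s with Some n => i <? n | None => true end.

(* well-formed trees whose leaves satisfy P; T X corresponds to wf (fun _ => True) *)
Definition wf {X : Type} (P : X -> Prop) (t : rtree X) : Prop :=
  t [] <> LAbs /\
  (forall p i, t (p ++ [i]) <> LAbs <->
      exists s m, t p = LNode s m /\ valid_child s i = true) /\
  (forall p s m, t p = LNode s m -> (is_param s = true <-> m <> None)) /\
  (forall p x, t p = LLeaf x -> P x).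

Definition wfT {X : Type} (t : rtree X) : Prop := wf (fun _ => True) t.

(* t <= t' : t arises from t' by replacing subtrees with bottom *)
Definition tle_cpo {X : Type} (t t' : rtree X) : Prop :=
  forall p, t p = t' p \/ t p = LBot \/ t p = LAbs.

Definition is_lub {X : Type} (c : nat -> rtree X) (t : rtree X) : Prop :=
  (forall n, tle_cpo (c n) t) /\
  (forall u, wfT u -> (forall n, tle_cpo (c n) u) -> tle_cpo t u).

Fixpoint flat_go {X : Type} (r : rtree (rtree X)) (q p : list nat) : label X :=
  match r q with
  | LAbs => LAbs
  | LBot => match p with [] => LBot | _ => LAbs end
  | LLeaf t => t p
  | LNode s m => match p with [] => LNode s m | i :: p' => flat_go r (q ++ [i]) p' end
  end.
Definition flatten {X : Type} (r : rtree (rtree X)) : rtree X := fun p => flat_go r [] p.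

Definition restrict {X : Type} (P : X -> Prop) (t : rtree X) : rtree unit :=
  fun p => match t p with
           | LAbs => LAbs | LBot => LBot | LNode s m => LNode s m
           | LLeaf x => if excluded_middle_informative (P x) then LLeaf tt else LBot
           end.

(* supremum of an ascending chain of labels (classically) *)
Definition lsup {X : Type} (c : nat -> label X) : label X :=
  match excluded_middle_informative (exists n, c n <> LAbs /\ c n <> LBot) with
  | left H => c (proj1_sig (constructive_indefinite_description _ H))
  | right _ => if excluded_middle_informative (exists n, c n = LBot) then LBot else LAbs
  end.

Fixpoint num (n : nat) : val := match n with 0 => VZ | S k => VS (num k) end.
Fixpoint val_num (v : val) : option nat :=
  match v with VZ => Some 0 | VS w => option_map S (val_num w) | _ => None end.

Definition bot_at {X : Type} (p : list nat) : label X :=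
  match p with [] => LBot | _ => LAbs end.

Fixpoint approx (n : nat) (K : list comp) (M : comp) (p : list nat) : label val :=
  match n with
  | 0 => bot_at p
  | S n =>
    match M with
    | CRet V => match K with
                | [] => match p with [] => LLeaf V | _ => LAbs end
                | N :: K' => approx n K' (subst0 N V) p
                end
    | CApp (VLam _ B) V => approx n K (subst0 B V) p
    | CApp _ _ => bot_at p
    | CLet M1 N => approx n (N :: K) M1 p
    | CFix V =>
        (* fix(F) -> F (\z. let fix(F) => y in y z) *)
        match V with
        | VLam (TArr a _) _ =>
            approx n K (CApp V (VLam a (CLet (CFix (ren_v S V)) (CApp (VVar 0) (VVar 1))))) p
        | _ => bot_at p
        end
    | CCase V M1 N1 => match V with
                       | VZ => approx n K M1 p
                       | VS W => approx n K (subst0 N1 W) p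
                       | _ => bot_at p
                       end
    | COp s Ms => match p with
                  | [] => LNode s None
                  | i :: p' => if valid_child s i then approx n K (nth i Ms (CRet VStar)) p'
                               else LAbs
                  end
    | COpP s V Ms => match val_num V with
                     | Some m => match p with
                                 | [] => LNode s (Some m)
                                 | i :: p' => if valid_child s i
                                              then approx n K (nth i Ms (CRet VStar)) p'
                                              else LAbs
                                 end
                     | None => bot_at p
                     end
    | COpC s V => match p with
                  | [] => LNode s None
                  | i :: p' => if valid_child s i then approx n K (CApp V (num i)) p' else LAbs
                  end
    | COpPC s V W => match val_num V with
                     | Some m => match p with
                                 | [] => LNode s (Some m)
                                 | i :: p' => if valid_child s i
                                              then approx n K (CApp W (num i)) p'
                                              else LAbs
                                 end
                     | None => bot_at p
                     end
    end
  end.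

Definition optree (M : comp) : rtree val := fun p => lsup (fun n => approx n [] M p).

Section Modalities.
Variable O : Type.
Variable sem : O -> rtree unit -> Prop.

Definition scott_open (U : rtree unit -> Prop) : Prop :=
  (forall t t', wfT t -> wfT t' -> tle_cpo t t' -> U t -> U t') /\
  (forall (c : nat -> rtree unit) t,
      (forall n, wfT (c n)) -> (forall n, tle_cpo (c n) (c (S n))) ->
      wfT t -> is_lub c t -> U t -> exists n, U (c n)).

Definition modal {X : Type} (o : O) (A : X -> Prop) (t : rtree X) : Prop :=
  sem o (restrict A t).

Inductive form : Type :=
  | FTop (o : O) | FBot (o : O)
  | FOr (J : Type) (f : J -> form) | FAnd (J : Type) (f : J -> form).

Fixpoint sem_form (F : form) : rtree unit -> Prop :=
  match F with
  | FTop o => modal o (fun _ : unit => True)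
  | FBot o => modal o (fun _ : unit => False)
  | FOr J f => fun t => exists i, sem_form (f i) t
  | FAnd J f => fun t => forall i, sem_form (f i) t
  end.

Definition tri_le (t t' : rtree unit) : Prop :=
  forall F, sem_form F t -> sem_form F t'.
Definition curly_le (r r' : rtree (rtree unit)) : Prop :=
  forall o F, modal o (sem_form F) r -> modal o (sem_form F) r'.

Definition decomposable : Prop :=
  forall r r' : rtree (rtree unit), wf wfT r -> wf wfT r' ->
    curly_le r r' -> tri_le (flatten r) (flatten r').

(* relator O(R), for R a relation on the subset D *)
Definition tsim {X Y : Type} (D : X -> Prop) (R : X -> Y -> Prop) (t : rtree X) (t' : rtree Y) :=
  forall (A : X -> Prop), (forall x, A x -> D x) ->
    forall o, modal o A t -> modal o (fun y => exists x, A x /\ R x y) t'.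

Record simulation (Rv : ty -> val -> val -> Prop) (Rc : ty -> comp -> comp -> Prop) : Prop := {
  sim_tyv : forall t V W, Rv t V W -> tyv [] V t /\ tyv [] W t;
  sim_tyc : forall t M N, Rc t M N -> tyc [] M t /\ tyc [] N t;
  sim_nat : forall V W, Rv TNat V W -> V = W;
  sim_comp : forall t M N, Rc t M N -> tsim (fun V => tyv [] V t) (Rv t) (optree M) (optree N);
  sim_app : forall t' t V W, Rv (TArr t' t) V W ->
              forall U, tyv [] U t' -> Rc t (CApp V U) (CApp W U) }.

Definition simv (t : ty) (V W : val) : Prop :=
  exists Rv Rc, simulation Rv Rc /\ Rv t V W.
Definition simc (t : ty) (M N : comp) : Prop :=
  exists Rv Rc, simulation Rv Rc /\ Rc t M N.

End Modalities.

Definition openv (R : ty -> val -> val -> Prop) (G : list ty) (t : ty) (V W : val) : Prop :=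
  tyv G V t /\ tyv G W t /\
  forall sg : list val, Forall2 (fun U a => tyv [] U a) sg G ->
    R t (sub_v (inst sg) V) (sub_v (inst sg) W).
Definition openc (R : ty -> comp -> comp -> Prop) (G : list ty) (t : ty) (M N : comp) : Prop :=
  tyc G M t /\ tyc G N t /\
  forall sg : list val, Forall2 (fun U a => tyv [] U a) sg G ->
    R t (sub_c (inst sg) M) (sub_c (inst sg) N).

Record compatible (Ov : list ty -> ty -> val -> val -> Prop)
                  (Oc : list ty -> ty -> comp -> comp -> Prop) : Prop := {
  c_var : forall G n t, nth_error G n = Some t -> Ov G t (VVar n) (VVar n);
  c_star : forall G, Ov G TUnit VStar VStar;
  c_zero : forall G, Ov G TNat VZ VZ;
  c_succ : forall G V W, Ov G TNat V W -> Ov G TNat (VS V) (VS W);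
  c_lam : forall G t r M N, Oc (t :: G) r M N -> Ov G (TArr t r) (VLam t M) (VLam t N);
  c_app : forall G t r V V' W W', Ov G (TArr t r) V V' -> Ov G t W W' ->
            Oc G r (CApp V W) (CApp V' W');
  c_ret : forall G t V W, Ov G t V W -> Oc G t (CRet V) (CRet W);
  c_let : forall G t r M M' N N', Oc G t M M' -> Oc (t :: G) r N N' ->
            Oc G r (CLet M N) (CLet M' N');
  c_fix : forall G t r V W, Ov G (TArr (TArr t r) (TArr t r)) V W ->
            Oc G (TArr t r) (CFix V) (CFix W);
  c_case : forall G t V W M M' N N', Ov G TNat V W -> Oc G t M M' ->
            Oc (TNat :: G) t N N' -> Oc G t (CCase V M N) (CCase W M' N');
  c_op : forall G t s Ms Ns, ar s = AFin (length Ms) -> Forall2 (Oc G t) Ms Ns ->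
            Oc G t (COp s Ms) (COp s Ns);
  c_opP : forall G t s V W Ms Ns, ar s = APFin (length Ms) -> Ov G TNat V W ->
            Forall2 (Oc G t) Ms Ns -> Oc G t (COpP s V Ms) (COpP s W Ns);
  c_opC : forall G t s V W, ar s = ACount -> Ov G (TArr TNat t) V W ->
            Oc G t (COpC s V) (COpC s W);
  c_opPC : forall G t s V V' W W', ar s = APCount -> Ov G TNat V V' ->
            Ov G (TArr TNat t) W W' -> Oc G t (COpPC s V W) (COpPC s V' W') }.

End Lang.

(* Main.v *)
Require Import Defs.
From Stdlib Require Import List Arith Lia FunctionalExtensionality ClassicalEpsilon.
Import ListNotations.

Arguments VStar {Op}. Arguments VZ {Op}. Arguments VS {Op}. Arguments VLam {Op}. Arguments VVar {Op}.
Arguments CApp {Op}. Arguments CRet {Op}. Arguments CLet {Op}. Arguments CFix {Op}.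
Arguments CCase {Op}. Arguments COp {Op}. Arguments COpP {Op}. Arguments COpC {Op}. Arguments COpPC {Op}.
Arguments ren_v {Op}. Arguments ren_c {Op}. Arguments sub_v {Op}. Arguments sub_c {Op}.
Arguments upsub {Op}. Arguments subst0 {Op}. Arguments inst {Op}. Arguments num {Op}. Arguments val_num {Op}.
Arguments tyv {Op}. Arguments tyc {Op}.

Section Syn.
Variable Op : Type.
Variable ar : Op -> arity.
Notation val := (val Op). Notation comp := (comp Op).

Section Ind.
Variables (Pv : val -> Prop) (Pc : comp -> Prop).
Hypotheses
  (h_star : Pv VStar) (h_z : Pv VZ) (h_s : forall v, Pv v -> Pv (VS v))
  (h_lam : forall t M, Pc M -> Pv (VLam t M)) (h_var : forall n, Pv (VVar n))
  (h_app : forall v w, Pv v -> Pv w -> Pc (CApp v w))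
  (h_ret : forall v, Pv v -> Pc (CRet v))
  (h_let : forall M N, Pc M -> Pc N -> Pc (CLet M N))
  (h_fix : forall v, Pv v -> Pc (CFix v))
  (h_case : forall v M N, Pv v -> Pc M -> Pc N -> Pc (CCase v M N))
  (h_op : forall s Ms, Forall Pc Ms -> Pc (COp s Ms))
  (h_opP : forall s v Ms, Pv v -> Forall Pc Ms -> Pc (COpP s v Ms))
  (h_opC : forall s v, Pv v -> Pc (COpC s v))
  (h_opPC : forall s v w, Pv v -> Pv w -> Pc (COpPC s v w)).

Fixpoint vind (v : val) : Pv v :=
  match v with
  | VStar => h_star | VZ => h_z | VS v => h_s v (vind v)
  | VLam t M => h_lam t M (cind M) | VVar n => h_var n
  end
with cind (M : comp) : Pc M :=
  match M with
  | CApp v w => h_app v w (vind v) (vind w)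
  | CRet v => h_ret v (vind v)
  | CLet M N => h_let M N (cind M) (cind N)
  | CFix v => h_fix v (vind v)
  | CCase v M N => h_case v M N (vind v) (cind M) (cind N)
  | COp s Ms => h_op s Ms ((fix go l : Forall Pc l :=
        match l with [] => Forall_nil _ | x :: l => Forall_cons _ (cind x) (go l) end) Ms)
  | COpP s v Ms => h_opP s v Ms (vind v) ((fix go l : Forall Pc l :=
        match l with [] => Forall_nil _ | x :: l => Forall_cons _ (cind x) (go l) end) Ms)
  | COpC s v => h_opC s v (vind v)
  | COpPC s v w => h_opPC s v w (vind v) (vind w)
  end.

Lemma vc_ind : (forall v, Pv v) /\ (forall M, Pc M).
Proof. split; [exact vind | exact cind]. Qed.
End Ind.

Ltac mapeq H := rewrite ?map_map; apply map_ext_in; intros ? Hin;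
  rewrite Forall_forall in H; specialize (H _ Hin).

Lemma ren_ren :
  (forall (v : val) xi1 xi2, ren_v xi2 (ren_v xi1 v) = ren_v (fun n => xi2 (xi1 n)) v) /\
  (forall (M : comp) xi1 xi2, ren_c xi2 (ren_c xi1 M) = ren_c (fun n => xi2 (xi1 n)) M).
Proof.
  assert (U : forall xi1 xi2 : nat -> nat, (fun n => upren xi2 (upren xi1 n)) = upren (fun n => xi2 (xi1 n))).
  { intros; extensionality n; destruct n; reflexivity. }
  apply vc_ind; intros; simpl; f_equal; auto;
  try (match goal with H : forall _ _, _ = _ |- _ => rewrite H; rewrite ?U; reflexivity end);
  try (mapeq H; auto); try (mapeq H0; auto).
Qed.

Lemma ren_sub :
  (forall (v : val) xi s, sub_v s (ren_v xi v) = sub_v (fun n => s (xi n)) v) /\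
  (forall (M : comp) xi s, sub_c s (ren_c xi M) = sub_c (fun n => s (xi n)) M).
Proof.
  assert (U : forall xi (s : nat -> val), (fun n => upsub s (upren xi n)) = upsub (fun n => s (xi n))).
  { intros; extensionality n; destruct n; reflexivity. }
  apply vc_ind; intros; simpl; f_equal; auto;
  try (match goal with H : forall _ _, _ = _ |- _ => rewrite H; rewrite ?U; reflexivity end);
  try (mapeq H; auto); try (mapeq H0; auto).
Qed.

Lemma sub_ren :
  (forall (v : val) xi s, ren_v xi (sub_v s v) = sub_v (fun n => ren_v xi (s n)) v) /\
  (forall (M : comp) xi s, ren_c xi (sub_c s M) = sub_c (fun n => ren_v xi (s n)) M).
Proof.
  assert (U : forall xi (s : nat -> val), (fun n => ren_v (upren xi) (upsub s n)) = upsub (fun n => ren_v xi (s n))).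
  { intros; extensionality n; destruct n; simpl; try reflexivity.
    rewrite !(proj1 ren_ren). reflexivity. }
  apply vc_ind; intros; simpl; f_equal; auto;
  try (match goal with H : forall _ _, _ = _ |- _ => rewrite H; rewrite ?U; reflexivity end);
  try (mapeq H; auto); try (mapeq H0; auto).
Qed.

Lemma sub_sub :
  (forall (v : val) s1 s2, sub_v s2 (sub_v s1 v) = sub_v (fun n => sub_v s2 (s1 n)) v) /\
  (forall (M : comp) s1 s2, sub_c s2 (sub_c s1 M) = sub_c (fun n => sub_v s2 (s1 n)) M).
Proof.
  assert (U : forall (s1 s2 : nat -> val), (fun n => sub_v (upsub s2) (upsub s1 n)) = upsub (fun n => sub_v s2 (s1 n))).
  { intros; extensionality n; destruct n; simpl; try reflexivity.
    rewrite (proj1 ren_sub), (proj1 sub_ren). reflexivity. }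
  apply vc_ind; intros; simpl; f_equal; auto;
  try (match goal with H : forall _ _, _ = _ |- _ => rewrite H; rewrite ?U; reflexivity end);
  try (mapeq H; auto); try (mapeq H0; auto).
Qed.

Lemma sub_id :
  (forall v : val, sub_v VVar v = v) /\ (forall M : comp, sub_c VVar M = M).
Proof.
  assert (U : upsub (@VVar Op) = VVar).
  { extensionality n; destruct n; reflexivity. }
  apply vc_ind; intros; simpl; f_equal; auto;
  try (match goal with H : forall _, _ = _ |- _ => rewrite ?U; rewrite H; reflexivity end);
  try (rewrite U; auto);
  try (transitivity (map (fun x => x) Ms); [apply map_ext_in; intros ? Hin; rewrite Forall_forall in *; eauto | apply map_id]).
Qed.

Lemma ren_as_sub :
  (forall (v : val) xi, ren_v xi v = sub_v (fun n => VVar (xi n)) v) /\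
  (forall (M : comp) xi, ren_c xi M = sub_c (fun n => VVar (xi n)) M).
Proof.
  assert (U : forall xi, upsub (fun n => @VVar Op (xi n)) = fun n => VVar (upren xi n)).
  { intros; extensionality n; destruct n; reflexivity. }
  apply vc_ind; intros; simpl; f_equal; auto;
  try (match goal with H : forall _, _ = _ |- _ => rewrite ?U; rewrite H; reflexivity end);
  try (rewrite U; auto);
  try (mapeq H; auto); try (mapeq H0; auto).
Qed.

Definition scons (V : val) (s : nat -> val) : nat -> val :=
  fun n => match n with 0 => V | S k => s k end.

Lemma subst0_up M s V :
  subst0 (sub_c (upsub s) M) V = sub_c (scons V s) M.
Proof.
  unfold subst0. rewrite (proj2 sub_sub). f_equal. extensionality n.
  destruct n; simpl; try reflexivity.
  rewrite (proj1 ren_sub). simpl. apply (proj1 sub_id).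
Qed.

Lemma subst0_sub M V : subst0 M V = sub_c (scons V VVar) M.
Proof. reflexivity. Qed.

End Syn.

Scheme tyv_mind := Induction for tyv Sort Prop with tyc_mind := Induction for tyc Sort Prop.
Combined Scheme ty_mind from tyv_mind, tyc_mind.

Section Ty.
Variable Op : Type.
Variable ar : Op -> arity.
Notation val := (val Op). Notation comp := (comp Op).
Notation tyv := (tyv ar). Notation tyc := (tyc ar).

Definition rn (G D : list ty) (xi : nat -> nat) :=
  forall n a, nth_error G n = Some a -> nth_error D (xi n) = Some a.
Definition sb (G D : list ty) (s : nat -> val) :=
  forall n a, nth_error G n = Some a -> tyv D (s n) a.

Lemma rn_up G D xi t : rn G D xi -> rn (t :: G) (t :: D) (upren xi).
Proof. intros H [|n] a; simpl; auto. Qed.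

Ltac listcase :=
  match goal with
  | |- ar _ = _ => rewrite length_map; assumption
  | H : In _ (map _ _) |- _ => apply in_map_iff in H; destruct H as [? [<- ?]]; eauto
  end.

Lemma ty_ren :
  (forall G v t, tyv G v t -> forall D xi, rn G D xi -> tyv D (ren_v xi v) t) /\
  (forall G M t, tyc G M t -> forall D xi, rn G D xi -> tyc D (ren_c xi M) t).
Proof.
  apply (ty_mind Op ar (fun G v t _ => forall D xi, rn G D xi -> tyv D (ren_v xi v) t)
                       (fun G M t _ => forall D xi, rn G D xi -> tyc D (ren_c xi M) t));
  intros; simpl; econstructor; eauto using rn_up; intros; try listcase.
Qed.

Lemma sb_up G D s t : sb G D s -> sb (t :: G) (t :: D) (upsub s).
Proof.
  intros H [|n] a; simpl; intros E.
  - constructor. simpl. auto.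
  - eapply (proj1 ty_ren); eauto. intros k b; simpl; auto.
Qed.

Lemma ty_sub :
  (forall G v t, tyv G v t -> forall D s, sb G D s -> tyv D (sub_v s v) t) /\
  (forall G M t, tyc G M t -> forall D s, sb G D s -> tyc D (sub_c s M) t).
Proof.
  apply (ty_mind Op ar (fun G v t _ => forall D s, sb G D s -> tyv D (sub_v s v) t)
                       (fun G M t _ => forall D s, sb G D s -> tyc D (sub_c s M) t));
  intros; simpl; try (econstructor; eauto using sb_up; intros; try listcase; fail).
  apply H; auto.
Qed.

Definition agr (k : nat) (s s' : nat -> val) := forall n, n < k -> s n = s' n.

Lemma agr_up k s s' : agr k s s' -> agr (S k) (upsub s) (upsub s').
Proof. intros H [|n] Hn; simpl; auto. rewrite H; auto; lia. Qed.

Lemma ty_agree :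
  (forall G v t, tyv G v t -> forall s s', agr (length G) s s' -> sub_v s v = sub_v s' v) /\
  (forall G M t, tyc G M t -> forall s s', agr (length G) s s' -> sub_c s M = sub_c s' M).
Proof.
  apply (ty_mind Op ar (fun G v t _ => forall s s', agr (length G) s s' -> sub_v s v = sub_v s' v)
                       (fun G M t _ => forall s s', agr (length G) s s' -> sub_c s M = sub_c s' M));
  intros; simpl; f_equal; eauto using agr_up;
  try (apply map_ext_in; intros; eauto).
  intros _. apply H. apply nth_error_Some. congruence.
Qed.

Lemma closed_sub_v v t s : tyv [] v t -> sub_v s v = v.
Proof.
  intros H. rewrite ((proj1 ty_agree) _ _ _ H s VVar). apply (proj1 (sub_id Op)).
  intros n Hn; simpl in Hn; lia.
Qed.
Lemma closed_sub_c M t s : tyc [] M t -> sub_c s M = M.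
Proof.
  intros H. rewrite ((proj2 ty_agree) _ _ _ H s VVar). apply (proj2 (sub_id Op)).
  intros n Hn; simpl in Hn; lia.
Qed.
Lemma closed_ren_v v t xi : tyv [] v t -> ren_v xi v = v.
Proof. intros H. rewrite (proj1 (ren_as_sub Op)). eapply closed_sub_v; eauto. Qed.

Lemma ty_subst0 G a N t V : tyc (a :: G) N t -> tyv G V a -> tyc G (subst0 N V) t.
Proof.
  intros H1 H2. eapply (proj2 ty_sub); eauto.
  intros [|n] b E; simpl in *. congruence. constructor; auto.
Qed.

Lemma ty_weak0 v t G : tyv [] v t -> tyv G v t.
Proof.
  intros H. rewrite <- (closed_ren_v v t (fun n => n) H).
  eapply (proj1 ty_ren); eauto. intros n a E; destruct n; discriminate.
Qed.

End Ty.

Arguments LAbs {Op X}. Arguments LBot {Op X}. Arguments LLeaf {Op X}. Arguments LNode {Op X}.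
Arguments bot_at {Op X}. Arguments flatten {Op X}. Arguments restrict {Op X}.
Arguments tle_cpo {Op X}. Arguments lsup {Op X}. Arguments flat_go {Op X}.

Section Trees.
Variable Op : Type.
Variable ar : Op -> arity.
Variable O : Type.
Variable sem : O -> rtree Op unit -> Prop.
Hypothesis SO : forall o, scott_open Op ar (sem o).

Notation rtree := (rtree Op).
Notation wf := (wf Op ar).
Notation wfT := (wfT Op ar).
Notation modal := (modal Op O sem).

Definition tmap {X Y} (f : X -> Y) (t : rtree X) : rtree Y :=
  fun p => match t p with LAbs => LAbs | LBot => LBot | LLeaf x => LLeaf (f x)
                     | LNode s m => LNode s m end.

Definition TS {X Y} (R : X -> Y -> Prop) (t : rtree X) (t' : rtree Y) : Prop :=
  forall (A : X -> Prop) o, modal o A t -> modal o (fun y => exists x, A x /\ R x y) t'.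

Lemma restrict_ext {X} (A B : X -> Prop) (t : rtree X) :
  (forall x, A x <-> B x) -> restrict A t = restrict B t.
Proof.
  intros H; extensionality p; unfold restrict; destruct (t p); auto.
  destruct (excluded_middle_informative (A x)), (excluded_middle_informative (B x)); firstorder.
Qed.

Lemma modal_ext {X} (A B : X -> Prop) o (t : rtree X) :
  (forall x, A x <-> B x) -> modal o A t -> modal o B t.
Proof. intros H; unfold modal; rewrite (restrict_ext A B t H); auto. Qed.

Lemma restrict_abs {X} (A : X -> Prop) (t : rtree X) p : restrict A t p = LAbs <-> t p = LAbs.
Proof.
  unfold restrict; destruct (t p); try (split; congruence).
  destruct (excluded_middle_informative (A x)); split; congruence.
Qed.
Lemma restrict_node {X} (A : X -> Prop) (t : rtree X) p s m : restrict A t p = LNode s m <-> t p = LNode s m.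
Proof.
  unfold restrict; destruct (t p); try (split; congruence).
  destruct (excluded_middle_informative (A x)); split; congruence.
Qed.

Lemma wf_weaken {X} (P Q : X -> Prop) (t : rtree X) : wf P t -> (forall x, P x -> Q x) -> wf Q t.
Proof. intros (H1 & H2 & H3 & H4) H; split; [|split; [|split]]; auto. intros; eauto. Qed.

Lemma wfT_of {X} (P : X -> Prop) (t : rtree X) : wf P t -> wfT t.
Proof. intros H; eapply wf_weaken; eauto. Qed.

Lemma wf_restrict {X} (P : X -> Prop) A (t : rtree X) : wf P t -> wfT (restrict A t).
Proof.
  intros (H1 & H2 & H3 & H4); split; [|split; [|split]].
  - rewrite restrict_abs; auto.
  - intros p i; split.
    + intros Hn. rewrite restrict_abs in Hn. apply H2 in Hn. destruct Hn as (s & m & E & V).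
      exists s, m; split; auto. apply restrict_node; auto.
    + intros (s & m & E & V). rewrite restrict_abs. apply H2. exists s, m; split; auto.
      apply restrict_node in E; auto.
  - intros p s m E. apply restrict_node in E. eapply H3; eauto.
  - auto.
Qed.

Lemma modal_le {X Y} (t : rtree X) (t' : rtree Y) A B o :
  wfT t -> wfT t' -> tle_cpo (restrict A t) (restrict B t') -> modal o A t -> modal o B t'.
Proof.
  intros W W' L H. unfold modal in *. eapply (proj1 (SO o)); [eapply wf_restrict; exact W|eapply wf_restrict; exact W'|exact L|exact H].
Qed.

Lemma modal_mono {X} (t : rtree X) A B o :
  wfT t -> (forall x, A x -> B x) -> modal o A t -> modal o B t.
Proof.
  intros W H. apply modal_le; auto. intros p. unfold restrict. destruct (t p); auto.
  destruct (excluded_middle_informative (A x)), (excluded_middle_informative (B x)); auto.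
  exfalso; auto.
Qed.

Lemma modal_tle {X} (t t' : rtree X) A o :
  wfT t -> wfT t' -> tle_cpo t t' -> modal o A t -> modal o A t'.
Proof.
  intros W W' L. apply modal_le; auto. intros p. unfold restrict.
  destruct (L p) as [E|[E|E]]; rewrite E; auto.
Qed.

Lemma TS_comp {X Y Z} (R : X -> Y -> Prop) (S : Y -> Z -> Prop) (t : rtree X) (t' : rtree Y) (t'' : rtree Z) :
  TS R t t' -> TS S t' t'' -> TS (fun x z => exists y, R x y /\ S y z) t t''.
Proof.
  intros H1 H2 A o H. apply H1, H2 in H. eapply modal_ext; [|exact H].
  intros z; firstorder.
Qed.

Lemma TS_mono {X Y} (R R' : X -> Y -> Prop) (t : rtree X) (t' : rtree Y) :
  wfT t' -> (forall x y, R x y -> R' x y) -> TS R t t' -> TS R' t t'.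
Proof.
  intros W HR H A o HA. apply H in HA. eapply modal_mono; eauto.
  intros y (x & ? & ?); eauto.
Qed.

Lemma TS_le_l {X Y} (R : X -> Y -> Prop) (t0 t : rtree X) (t' : rtree Y) :
  wfT t0 -> wfT t -> tle_cpo t0 t -> TS R t t' -> TS R t0 t'.
Proof. intros W0 W L H A o HA. apply H. eapply modal_tle; [exact W0|exact W|exact L|exact HA]. Qed.

Lemma TS_le_r {X Y} (R : X -> Y -> Prop) (t : rtree X) (t' t'' : rtree Y) :
  wfT t' -> wfT t'' -> tle_cpo t' t'' -> TS R t t' -> TS R t t''.
Proof. intros W0 W L H A o HA. eapply modal_tle; [exact W0|exact W|exact L|apply H; exact HA]. Qed.

Lemma TS_shape {X Y} (R : X -> Y -> Prop) (t : rtree X) (t' : rtree Y) :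
  wfT t -> wfT t' ->
  (forall p, (t p = LAbs) \/ (t p = LBot) \/ (exists s m, t p = LNode s m /\ t' p = LNode s m) \/
             (exists x y, t p = LLeaf x /\ t' p = LLeaf y /\ R x y)) ->
  TS R t t'.
Proof.
  intros W W' H A o. apply modal_le; auto. intros p. unfold restrict.
  destruct (H p) as [E|[E|[(s&m&E&E')|(x&y&E&E'&Rxy)]]]; rewrite E; auto.
  - rewrite E'; auto.
  - rewrite E'. destruct (excluded_middle_informative (A x)); auto.
    destruct (excluded_middle_informative (exists x0, A x0 /\ R x0 y)); auto.
    exfalso; eauto.
Qed.

Lemma restrict_tmap {X Y} (f : X -> Y) A (t : rtree X) :
  restrict A (tmap f t) = restrict (fun x => A (f x)) t.
Proof. extensionality p. unfold restrict, tmap. destruct (t p); reflexivity. Qed.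

Lemma wf_tmap {X Y} (P : X -> Prop) (Q : Y -> Prop) (f : X -> Y) (t : rtree X) :
  wf P t -> (forall x, P x -> Q (f x)) -> wf Q (tmap f t).
Proof.
  intros (H1 & H2 & H3 & H4) HQ.
  assert (A1 : forall p, tmap f t p = LAbs <-> t p = LAbs).
  { intros p; unfold tmap; destruct (t p); split; congruence. }
  assert (A2 : forall p s m, tmap f t p = LNode s m <-> t p = LNode s m).
  { intros p s0 m0; unfold tmap; destruct (t p); split; congruence. }
  split; [|split; [|split]].
  - rewrite A1; auto.
  - intros p i. rewrite A1, H2. split; intros (s0&m0&E&V); exists s0, m0; split; auto;
    apply A2; auto.
  - intros p s0 m0 E. apply A2 in E. eapply H3; eauto.
  - intros p y E. unfold tmap in E. destruct (t p) eqn:E1; try discriminate.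
    injection E; intros; subst. eauto.
Qed.

Lemma TS_map {X Y X' Y'} (R : X -> Y -> Prop) (S : X' -> Y' -> Prop) (f : X -> X') (g : Y -> Y') (t : rtree X) (t' : rtree Y) :
  wfT t' -> (forall x y, R x y -> S (f x) (g y)) -> TS R t t' -> TS S (tmap f t) (tmap g t').
Proof.
  intros W HS H A o HA. unfold modal in *. rewrite restrict_tmap in HA. rewrite restrict_tmap.
  apply (H (fun x => A (f x))) in HA. eapply modal_mono; [exact W| |exact HA].
  intros y (x & Ax & Rxy). eauto.
Qed.

Lemma restrict_flatgo {X} (A : X -> Prop) (r : rtree (rtree X)) p q :
  restrict A (fun p => flat_go r q p) p = flat_go (tmap (restrict A) r) q p.
Proof.
  revert q; induction p as [|i p IH]; intros q; unfold restrict, tmap in *; simpl;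
  destruct (r q); auto.
  all: rewrite <- IH; reflexivity.
Qed.

Lemma restrict_flatten {X} (A : X -> Prop) (r : rtree (rtree X)) :
  restrict A (flatten r) = flatten (tmap (restrict A) r).
Proof. extensionality p. apply restrict_flatgo. Qed.

Lemma wf_flatten {X} (P : X -> Prop) (r : rtree (rtree X)) :
  wf (wf P) r -> wf P (flatten r).
Proof.
  intros (H1 & H2 & H3 & H4). unfold flatten.
  assert (RT : forall q, r q <> LAbs -> flat_go r q [] <> LAbs).
  { intros q Hq; simpl. destruct (r q) eqn:E; try congruence.
    destruct (H4 _ _ E) as (T1 & _); auto. }
  assert (CH : forall p q i, flat_go r q (p ++ [i]) <> LAbs <->
                exists s m, flat_go r q p = LNode s m /\ valid_child Op ar s i = true).
  { induction p as [|j p IH]; intros q i.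
    - simpl. destruct (r q) as [| |t|s0 m0] eqn:E.
      + split; [congruence| intros (?&?&?&?); congruence].
      + split; [congruence| intros (?&?&?&?); congruence].
      + destruct (H4 _ _ E) as (_ & T2 & _). apply (T2 []).
      + split.
        * intros Z. exists s0, m0; split; auto.
          assert (r (q ++ [i]) <> LAbs) as Z2.
          { intros Z3. simpl in Z. rewrite Z3 in Z. auto. }
          apply H2 in Z2. destruct Z2 as (s' & m' & E' & V). congruence.
        * intros (s & m' & E' & V). injection E'; intros; subst.
          apply RT. apply H2. eauto.
    - simpl. destruct (r q) as [| |t|s0 m0] eqn:E.
      + split; [congruence| intros (?&?&?&?); congruence].
      + split; [congruence| intros (?&?&?&?); congruence].
      + destruct (H4 _ _ E) as (_ & T2 & _). apply (T2 (j :: p)).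
      + apply IH. }
  assert (PA : forall p q s m, flat_go r q p = LNode s m -> (is_param Op ar s = true <-> m <> None)).
  { induction p as [|j p IH]; intros q s m; simpl; destruct (r q) eqn:E; try congruence.
    - destruct (H4 _ _ E) as (_ & _ & T3 & _). apply T3.
    - intros Z; injection Z; intros; subst. eapply H3; eauto.
    - destruct (H4 _ _ E) as (_ & _ & T3 & _). apply T3.
    - apply IH. }
  assert (LF : forall p q x, flat_go r q p = LLeaf x -> P x).
  { induction p as [|j p IH]; intros q x; simpl; destruct (r q) eqn:E; try congruence;
    try (destruct p; congruence);
    try (destruct (H4 _ _ E) as (_ & _ & _ & T4); apply T4).
    apply IH. }
  split; [|split; [|split]].
  - apply RT; auto.
  - intros p i. apply CH.
  - intros p s m E. eapply PA; eauto.
  - intros p x E. eapply LF; eauto.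
Qed.

Lemma restrict_True (t : rtree unit) : restrict (fun _ => True) t = t.
Proof.
  extensionality p. unfold restrict. destruct (t p); auto. destruct x.
  destruct (excluded_middle_informative True); tauto.
Qed.

Lemma restrict_False {X} (A : X -> Prop) (t : rtree X) :
  restrict (fun _ => False) (restrict A t) = restrict (fun _ => False) t.
Proof.
  extensionality p. unfold restrict. destruct (t p); auto.
  destruct (excluded_middle_informative (A x)); auto;
  destruct (excluded_middle_informative False); tauto.
Qed.

Lemma form_transfer {X Y} (R : X -> Y -> Prop) A (x : rtree X) (y : rtree Y) :
  TS R x y -> forall F, sem_form Op O sem F (restrict A x) ->
    sem_form Op O sem F (restrict (fun y => exists x, A x /\ R x y) y).
Proof.
  intros H F; induction F; simpl.
  - unfold modal. rewrite !restrict_True. apply H.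
  - unfold modal. rewrite !restrict_False. intros Z.
    apply H in Z. eapply modal_ext; [|exact Z]. firstorder.
  - intros (i & Hi). eauto.
  - intros Z i. eauto.
Qed.

Lemma DL {X Y} (R : X -> Y -> Prop) (r : rtree (rtree X)) (r' : rtree (rtree Y)) :
  decomposable Op ar O sem -> wf wfT r -> wf wfT r' -> TS (TS R) r r' ->
  TS R (flatten r) (flatten r').
Proof.
  intros DEC W W' H A o HA. unfold modal in *. rewrite restrict_flatten in HA. rewrite restrict_flatten.
  set (B := fun y => exists x, A x /\ R x y).
  assert (T : tri_le Op O sem (flatten (tmap (restrict A) r)) (flatten (tmap (restrict B) r'))).
  { apply DEC.
    - eapply wf_tmap; eauto. intros t Wt. eapply wf_restrict; eauto.
    - eapply wf_tmap; eauto. intros t Wt. eapply wf_restrict; eauto.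
    - intros o' F HF. unfold modal in *. rewrite restrict_tmap in HF. rewrite restrict_tmap.
      apply H in HF. eapply modal_mono; [eapply wfT_of; exact W'| |exact HF].
      intros y (x & Hx & Rxy). eapply form_transfer; eauto. }
  specialize (T (FTop O o)). simpl in T. unfold modal in T. rewrite !restrict_True in T. auto.
Qed.

Definition bott {X} : rtree X := fun p => bot_at p.

Lemma wf_bott {X} (P : X -> Prop) : wf P bott.
Proof.
  unfold bott, bot_at; split; [|split; [|split]].
  - congruence.
  - intros p i; split.
    + intros Z. destruct p; simpl in Z; congruence.
    + intros (s&m&E&_). destruct p; congruence.
  - intros p s m E; destruct p; congruence.
  - intros p x E; destruct p; congruence.
Qed.

Lemma TS_bott {X Y} (R : X -> Y -> Prop) (t' : rtree Y) : wfT t' -> TS R bott t'.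
Proof.
  intros W A o. apply modal_le; auto. apply (wf_bott (fun _ => True)).
  intros p. unfold restrict, bott, bot_at. destruct p; auto.
Qed.

End Trees.

Arguments approx {Op} ar. Arguments optree {Op} ar.

Section Oper.
Variable Op : Type.
Variable ar : Op -> arity.
Notation val := (val Op). Notation comp := (comp Op).
Notation tyv := (tyv ar). Notation tyc := (tyc ar).
Notation approx := (approx ar).
Notation rtree := (rtree Op).
Notation valid_child := (valid_child Op ar).

Inductive sres :=
  | RSil (K : list comp) (M : comp)
  | RDone (V : val)
  | RStuck
  | RNode (s : Op) (m : option nat) (K : list comp) (ch : nat -> comp).

Definition fixbody (a : ty) (V : val) : val :=
  VLam a (CLet (CFix (ren_v S V)) (CApp (VVar 0) (VVar 1))).

Definition step (K : list comp) (M : comp) : sres :=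
  match M with
  | CRet V => match K with [] => RDone V | N :: K' => RSil K' (subst0 N V) end
  | CApp (VLam _ B) V => RSil K (subst0 B V)
  | CApp _ _ => RStuck
  | CLet M1 N => RSil (N :: K) M1
  | CFix V => match V with
              | VLam (TArr a _) _ => RSil K (CApp V (fixbody a V))
              | _ => RStuck end
  | CCase V M1 N1 => match V with
                     | VZ => RSil K M1 | VS W => RSil K (subst0 N1 W) | _ => RStuck end
  | COp s Ms => RNode s None K (fun i => nth i Ms (CRet VStar))
  | COpP s V Ms => match val_num V with
                   | Some m => RNode s (Some m) K (fun i => nth i Ms (CRet VStar))
                   | None => RStuck end
  | COpC s V => RNode s None K (fun i => CApp V (num i))
  | COpPC s V W => match val_num V with
                   | Some m => RNode s (Some m) K (fun i => CApp W (num i))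
                   | None => RStuck end
  end.

Definition interp (r : sres) (n : nat) (p : list nat) : label Op val :=
  match r with
  | RSil K M => approx n K M p
  | RDone V => match p with [] => LLeaf V | _ => LAbs end
  | RStuck => bot_at p
  | RNode s m K ch => match p with
                      | [] => LNode s m
                      | i :: p' => if valid_child s i then approx n K (ch i) p' else LAbs
                      end
  end.

Lemma approx_step n K M p : approx (S n) K M p = interp (step K M) n p.
Proof.
  destruct M; cbn;
  repeat (cbn; match goal with |- context [match ?x with _ => _ end] => destruct x end);
  cbn; reflexivity.
Qed.

Definition lle {X} (l l' : label Op X) := l = l' \/ l = LBot \/ l = LAbs.

Lemma lle_refl {X} (l : label Op X) : lle l l.
Proof. left; auto. Qed.
Lemma lle_trans {X} (a b c : label Op X) : lle a b -> lle b c -> lle a c.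
Proof. unfold lle; intros [ -> | [ -> | -> ] ] H; auto. Qed.
Lemma lle_bot_at {X} p (l : label Op X) : lle (bot_at p) l.
Proof. destruct p; unfold lle; simpl; auto. Qed.
Lemma lle_val {X} (a b : label Op X) : lle a b -> a <> LBot -> a <> LAbs -> b = a.
Proof. unfold lle; intros [ -> | [ -> | -> ] ]; congruence. Qed.

Lemma approx_mono n K M p : lle (approx n K M p) (approx (S n) K M p).
Proof.
  revert K M p; induction n; intros K M p.
  - apply lle_bot_at.
  - rewrite !approx_step. destruct (step K M); simpl; auto using lle_refl.
    destruct p; auto using lle_refl. destruct (valid_child s n0); auto using lle_refl.
Qed.

Lemma approx_mono_le n m K M p : n <= m -> lle (approx n K M p) (approx m K M p).
Proof.
  induction 1. apply lle_refl. eapply lle_trans; eauto using approx_mono.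
Qed.

Lemma approx_stable n m K M p : n <= m -> approx n K M p <> LBot -> approx n K M p <> LAbs ->
  approx m K M p = approx n K M p.
Proof. intros; eapply lle_val; eauto using approx_mono_le. Qed.

Definition chain {X} (c : nat -> label Op X) := forall n m, n <= m -> lle (c n) (c m).

Lemma lsup_val {X} (c : nat -> label Op X) n :
  chain c -> c n <> LBot -> c n <> LAbs -> lsup c = c n.
Proof.
  intros Ch H1 H2. unfold lsup.
  destruct (excluded_middle_informative _) as [H|H].
  - destruct (constructive_indefinite_description _ H) as [k [K1 K2]]; simpl.
    destruct (le_ge_dec n k).
    + eapply lle_val; eauto.
    + symmetry; eapply lle_val; eauto.
  - exfalso; eauto.
Qed.

Lemma lsup_inv {X} (c : nat -> label Op X) :
  chain c -> lsup c <> LBot -> lsup c <> LAbs -> exists n, c n = lsup c.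
Proof.
  intros Ch H1 H2. unfold lsup in *.
  destruct (excluded_middle_informative _) as [H|H].
  - destruct (constructive_indefinite_description _ H) as [k [K1 K2]]; simpl in *. eauto.
  - destruct (excluded_middle_informative _); congruence.
Qed.

Lemma lsup_nabs {X} (c : nat -> label Op X) n :
  chain c -> c n <> LAbs -> lsup c <> LAbs.
Proof.
  intros Ch H. unfold lsup.
  destruct (excluded_middle_informative _) as [H1|H1].
  - destruct (constructive_indefinite_description _ H1) as [k [K1 K2]]; simpl in *. auto.
  - destruct (excluded_middle_informative _) as [H2|H2]; try congruence.
    destruct (c n) eqn:E; try congruence.
    + exfalso; eauto.
    + exfalso; apply H1; exists n; rewrite E; split; congruence.
    + exfalso; apply H1; exists n; rewrite E; split; congruence.
Qed.

Lemma lsup_abs_inv {X} (c : nat -> label Op X) n :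
  chain c -> lsup c = LAbs -> c n = LAbs.
Proof.
  intros Ch H. destruct (c n) eqn:E; auto; exfalso; apply (lsup_nabs c n Ch); auto; congruence.
Qed.

Lemma lsup_ge {X} (c : nat -> label Op X) n : chain c -> lle (c n) (lsup c).
Proof.
  intros Ch. destruct (c n) eqn:E; unfold lle; auto.
  all: left; rewrite <- E; symmetry; apply lsup_val; auto; congruence.
Qed.

Definition otree (K : list comp) (M : comp) : rtree val := fun p => lsup (fun n => approx n K M p).
Definition atree (n : nat) (K : list comp) (M : comp) : rtree val := fun p => approx n K M p.

Lemma chain_approx K M p : chain (fun n => approx n K M p).
Proof. intros n m H; apply approx_mono_le; auto. Qed.

Lemma optree_otree M : optree ar M = otree [] M.
Proof. reflexivity. Qed.

Lemma atree_le n K M : tle_cpo (atree n K M) (otree K M).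
Proof. intros p. apply (lsup_ge (fun n => approx n K M p)), chain_approx. Qed.

Lemma otree_inv K M p : otree K M p <> LBot -> otree K M p <> LAbs ->
  exists n, approx n K M p = otree K M p.
Proof. intros; apply lsup_inv; auto using chain_approx. Qed.

Lemma otree_val K M p n : approx n K M p <> LBot -> approx n K M p <> LAbs ->
  otree K M p = approx n K M p.
Proof. intros; apply (lsup_val (fun n => approx n K M p)); auto using chain_approx. Qed.

Lemma tle_otree (t : rtree val) K M :
  (forall p, t p <> LBot -> t p <> LAbs -> exists n, approx n K M p = t p) ->
  tle_cpo t (otree K M).
Proof.
  intros H p. destruct (t p) eqn:E; unfold lle; auto; left;
  (destruct (H p) as [n Hn]; [congruence|congruence|]);
  rewrite <- E, <- Hn; symmetry; apply otree_val; congruence.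
Qed.

Lemma otree_sil K M K' M' : step K M = RSil K' M' -> tle_cpo (otree K' M') (otree K M).
Proof.
  intros E. apply tle_otree. intros p H1 H2. destruct (otree_inv _ _ _ H1 H2) as [n Hn].
  exists (S n). rewrite approx_step, E. auto.
Qed.

End Oper.

Section Oper2.
Variable Op : Type.
Variable ar : Op -> arity.
Notation val := (val Op). Notation comp := (comp Op).
Notation tyv := (tyv ar). Notation tyc := (tyc ar).
Notation approx := (approx ar).
Notation rtree := (rtree Op).
Notation valid_child := (valid_child Op ar).
Notation step := (step Op). Notation interp := (interp Op ar).
Notation otree := (otree Op ar). Notation atree := (atree Op ar).
Notation lle := (lle Op).
Notation wf := (wf Op ar).

Inductive tyK : ty -> list comp -> ty -> Prop :=
  | tyK_nil a : tyK a [] a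
  | tyK_cons a b c N K : tyc [a] N b -> tyK b K c -> tyK a (N :: K) c.

Definition tycfg K M b := exists a, tyc [] M a /\ tyK a K b.

Definition step_ok (r : sres Op) (b : ty) : Prop :=
  match r with
  | RSil _ K M => tycfg K M b
  | RDone _ V => tyv [] V b
  | RStuck _ => True
  | RNode _ s m K ch => (is_param Op ar s = true <-> m <> None) /\
                        forall i, valid_child s i = true -> tycfg K (ch i) b
  end.

Lemma ty_num n : tyv [] (num n) TNat.
Proof. induction n; simpl; constructor; auto. Qed.

Ltac invty := match goal with
  | H : tyc _ (CApp _ _) _ |- _ => inversion H; subst; clear H
  | H : tyc _ (CRet _) _ |- _ => inversion H; subst; clear H
  | H : tyc _ (CLet _ _) _ |- _ => inversion H; subst; clear H
  | H : tyc _ (CFix _) _ |- _ => inversion H; subst; clear H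
  | H : tyc _ (CCase _ _ _) _ |- _ => inversion H; subst; clear H
  | H : tyc _ (COp _ _) _ |- _ => inversion H; subst; clear H
  | H : tyc _ (COpP _ _ _) _ |- _ => inversion H; subst; clear H
  | H : tyc _ (COpC _ _) _ |- _ => inversion H; subst; clear H
  | H : tyc _ (COpPC _ _ _) _ |- _ => inversion H; subst; clear H
  | H : tyv _ (VLam _ _) _ |- _ => inversion H; subst; clear H
  | H : tyv _ (VS _) _ |- _ => inversion H; subst; clear H
  | H : tyK _ [] _ |- _ => inversion H; subst; clear H
  | H : tyK _ (_ :: _) _ |- _ => inversion H; subst; clear H
  end.

Lemma step_typed K M b : tycfg K M b -> step_ok (step K M) b.
Proof.
  intros (a & HM & HK). destruct M; simpl; invty.
  - destruct v; simpl; auto. invty. exists a; split; auto. eapply ty_subst0; eauto.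
  - destruct K as [|N K]; simpl; invty; auto.
    eexists; split; eauto. eapply ty_subst0; eauto.
  - eexists; split; eauto. econstructor; eauto.
  - destruct v; simpl; auto. match goal with H : tyv _ (VLam _ _) _ |- _ => rename H into HV end.
    pose proof HV as HV2. inversion HV; subst.
    eexists; split; [|eauto]. econstructor; eauto. unfold fixbody.
    econstructor. econstructor.
    + econstructor. erewrite (closed_ren_v Op ar); eauto. apply ty_weak0; eauto.
    + econstructor; econstructor; simpl; reflexivity.
  - destruct v; simpl; auto.
    + eexists; split; eauto.
    + invty. eexists; split; eauto. eapply ty_subst0; eauto.
  - unfold is_param. match goal with H : ar _ = _ |- _ => rewrite H end.
    split; [split; congruence|].
    intros i Hi. unfold valid_child, nchildren in Hi. match goal with H : ar _ = _ |- _ => rewrite H in Hi end.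
    apply Nat.ltb_lt in Hi. eexists; split; eauto. match goal with H : forall M, In M _ -> _ |- _ => apply H end.
    apply nth_In; auto.
  - destruct (val_num v); simpl; auto.
    unfold is_param. match goal with H : ar _ = _ |- _ => rewrite H end.
    split; [split; congruence|].
    intros i Hi. unfold valid_child, nchildren in Hi. match goal with H : ar _ = _ |- _ => rewrite H in Hi end.
    apply Nat.ltb_lt in Hi. eexists; split; eauto. match goal with H : forall M, In M _ -> _ |- _ => apply H end.
    apply nth_In; auto.
  - unfold is_param. match goal with H : ar _ = _ |- _ => rewrite H end.
    split; [split; congruence|].
    intros i Hi. eexists; split; eauto. econstructor; eauto. apply ty_num.
  - destruct (val_num v); simpl; auto.
    unfold is_param. match goal with H : ar _ = _ |- _ => rewrite H end.
    split; [split; congruence|].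
    intros i Hi. eexists; split; eauto. econstructor; eauto. apply ty_num.
Qed.

Lemma approx_root n K M : approx n K M [] <> LAbs.
Proof.
  revert K M; induction n; intros K M. simpl; congruence.
  rewrite approx_step. destruct (step K M); simpl; try congruence; auto.
Qed.

Lemma approx_children n K M p i : approx n K M (p ++ [i]) <> LAbs <->
  exists s m, approx n K M p = LNode s m /\ valid_child s i = true.
Proof.
  revert K M p; induction n; intros K M p.
  - simpl. destruct p; simpl; split; try congruence; intros (?&?&?&?); congruence.
  - rewrite !approx_step. destruct (step K M); simpl.
    + apply IHn.
    + destruct p; simpl; split; try congruence; intros (?&?&?&?); congruence.
    + destruct p; simpl; split; try congruence; intros (?&?&?&?); congruence.
    + destruct p as [|j p]; simpl.
      * destruct (valid_child s i) eqn:E.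
        -- split; eauto. intros _. apply approx_root.
        -- split; try congruence. intros (?&?&?&?). congruence.
      * destruct (valid_child s j) eqn:E.
        -- apply IHn.
        -- split; try congruence. intros (?&?&?&?). congruence.
Qed.

Lemma approx_param n K M b p s m : tycfg K M b -> approx n K M p = LNode s m ->
  (is_param Op ar s = true <-> m <> None).
Proof.
  revert K M p; induction n; intros K M p H.
  - simpl. destruct p; simpl; congruence.
  - rewrite approx_step. pose proof (step_typed K M b H) as ST.
    destruct (step K M); simpl in *; intros E0.
    + eauto.
    + destruct p; congruence.
    + destruct p; simpl in E0; congruence.
    + destruct p as [|j p].
      * injection E0; intros; subst. apply ST.
      * destruct (valid_child s0 j) eqn:E; try congruence.
        eapply IHn; [apply ST; eauto|exact E0].
Qed.

Lemma approx_leaf n K M b p V : tycfg K M b -> approx n K M p = LLeaf V -> tyv [] V b.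
Proof.
  revert K M p; induction n; intros K M p H.
  - simpl. destruct p; simpl; congruence.
  - rewrite approx_step. pose proof (step_typed K M b H) as ST.
    destruct (step K M); simpl in *; intros E0.
    + eauto.
    + destruct p; try congruence; try (injection E0; intros; subst; auto).
    + destruct p; simpl in E0; congruence.
    + destruct p as [|j p]; try congruence.
      destruct (valid_child s j) eqn:E; try congruence.
      eapply IHn; [apply ST; eauto|exact E0].
Qed.

Definition tyd b (V : val) := tyv [] V b.

Lemma wf_atree n K M b : tycfg K M b -> wf (tyd b) (atree n K M).
Proof.
  intros H; unfold atree; split; [|split; [|split]].
  - apply approx_root.
  - intros p i; apply approx_children.
  - intros p s m; eapply approx_param; eauto.
  - intros p V; eapply approx_leaf; eauto.
Qed.

Lemma wf_otree K M b : tycfg K M b -> wf (tyd b) (otree K M).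
Proof.
  intros H. unfold otree.
  assert (Ch := chain_approx Op ar K M).
  split; [|split; [|split]].
  - apply (lsup_nabs Op _ 0); auto. apply approx_root.
  - intros p i; split.
    + intros Z. destruct (excluded_middle_informative (exists n, approx n K M (p ++ [i]) <> LAbs))
        as [[n Hn]|Hn].
      * apply approx_children in Hn. destruct Hn as (s&m&E&V). exists s, m; split; auto.
        rewrite (lsup_val Op _ n); auto; congruence.
      * exfalso. apply Z. unfold lsup.
        destruct (excluded_middle_informative _) as [[k [K1 K2]]|]; [exfalso; eauto|].
        destruct (excluded_middle_informative _) as [[k K1]|]; auto.
        exfalso; apply Hn; exists k; congruence.
    + intros (s&m&E&V). destruct (lsup_inv Op _ (Ch p)) as [n Hn]; try congruence.
      apply (lsup_nabs Op _ n); auto. apply approx_children. exists s, m; split; congruence.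
  - intros p s m E. destruct (lsup_inv Op _ (Ch p)) as [n Hn]; try congruence.
    apply (approx_param n K M b p); [exact H|]. congruence.
  - intros p V E. destruct (lsup_inv Op _ (Ch p)) as [n Hn]; try congruence.
    apply (approx_leaf n K M b p); [exact H|]. congruence.
Qed.

Definition lle2 {X} (l l' : label Op (rtree X)) :=
  l = l' \/ l = LBot \/ l = LAbs \/ exists t t', l = LLeaf t /\ l' = LLeaf t' /\ tle_cpo t t'.

Lemma flat_go_mono {X} (r r' : rtree (rtree X)) :
  (forall q, lle2 (r q) (r' q)) -> forall p q, lle (flat_go r q p) (flat_go r' q p).
Proof.
  intros H p; induction p as [|i p IH]; intros q; simpl;
  destruct (H q) as [E|[E|[E|(t&t'&E&E'&L)]]]; rewrite ?E.
  all: try (destruct (r' q); unfold lle; auto; try apply IH; fail).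
  all: try (unfold lle; auto; fail).
  all: try (rewrite E'; apply L).
Qed.

Lemma flatten_map_mono {X Y} (f g : X -> rtree Y) (t : rtree X) :
  (forall x, tle_cpo (f x) (g x)) -> tle_cpo (flatten (tmap Op f t)) (flatten (tmap Op g t)).
Proof.
  intros H p. apply flat_go_mono. intros q. unfold tmap, lle2.
  destruct (t q); auto. right; right; right; eauto.
Qed.

Lemma flat_shift {X} (r : rtree (rtree X)) q0 p q :
  flat_go r (q0 ++ q) p = flat_go (fun q' => r (q0 ++ q')) q p.
Proof.
  revert q; induction p as [|i p IH]; intros q; simpl; destruct (r (q0 ++ q)); auto.
  rewrite <- app_assoc. apply IH.
Qed.

Definition liftK (K2 : list comp) (r : sres Op) : sres Op :=
  match r with
  | RSil _ K M => RSil Op (K ++ K2) M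
  | RNode _ s m K ch => RNode Op s m (K ++ K2) ch
  | r => r
  end.

Lemma step_app K K2 M :
  step (K ++ K2) M = match step K M with RDone _ V => step K2 (CRet V) | r => liftK K2 r end.
Proof.
  destruct M; destruct K; simpl; try reflexivity;
  repeat (match goal with |- context [match ?x with _ => _ end] => destruct x end); reflexivity.
Qed.

Lemma atree_S n K M : atree (S n) K M = fun q => interp (step K M) n q.
Proof. extensionality q. apply approx_step. Qed.

Lemma flat_cons {X} (r : rtree (rtree X)) i p :
  flat_go r [i] p = flat_go (fun q => r (i :: q)) [] p.
Proof. exact (flat_shift r [i] p []). Qed.

Lemma flat_go_ext {X} (r r' : rtree (rtree X)) :
  (forall q, r q = r' q) -> forall q p, flat_go r q p = flat_go r' q p.
Proof. intros H. replace r with r'; auto. extensionality q; auto. Qed.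

Lemma flat_abs {X} (r : rtree (rtree X)) q p : r q = LAbs -> flat_go r q p = LAbs.
Proof. intros H; destruct p; simpl; rewrite H; auto. Qed.

Lemma split_le n K K2 M p :
  lle (approx n (K ++ K2) M p)
      (flatten (tmap Op (fun V => approx n K2 (CRet V)) (atree n K M)) p).
Proof.
  revert K M p; induction n; intros K M p.
  - apply lle_bot_at.
  - rewrite approx_step, step_app, atree_S.
    destruct (step K M) as [K' M'|V| |s m K' ch] eqn:E; cbn [liftK interp].
    + eapply lle_trans; [apply IHn|]. apply flatten_map_mono. intros V q. apply approx_mono.
    + unfold flatten. destruct p; cbn [flat_go tmap interp]; rewrite approx_step; apply lle_refl.
    + apply lle_bot_at.
    + unfold flatten. destruct p as [|i p]; cbn [flat_go tmap interp]; [apply lle_refl|].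
      destruct (valid_child s i) eqn:V; [|unfold lle; auto].
      cbn [app]. rewrite flat_cons.
      rewrite (flat_go_ext _ (tmap Op (fun V0 : val => approx (S n) K2 (CRet V0)) (atree n K' (ch i))));
        [| intros q; unfold tmap, atree; cbn [interp]; rewrite V; reflexivity].
      eapply lle_trans; [apply IHn|].
      apply (flatten_map_mono _ _ (atree n K' (ch i))). intros V0 q. apply approx_mono.
Qed.

Lemma join_le n m K K2 M p :
  lle (flatten (tmap Op (fun V => approx m K2 (CRet V)) (atree n K M)) p)
      (approx (n + m) (K ++ K2) M p).
Proof.
  revert K M p; induction n; intros K M p.
  - unfold flatten, atree. destruct p; cbn; unfold lle; auto.
  - rewrite atree_S. simpl plus. rewrite approx_step, step_app.
    destruct (step K M) as [K' M'|V| |s m0 K' ch] eqn:E; cbn [liftK interp].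
    + apply IHn.
    + unfold flatten. destruct p; cbn [flat_go tmap interp]; rewrite <- approx_step;
      apply approx_mono_le; lia.
    + unfold flatten. destruct p; cbn; unfold lle; auto.
    + unfold flatten. destruct p as [|i p]; cbn [flat_go tmap interp]; [apply lle_refl|].
      destruct (valid_child s i) eqn:V;
        [|rewrite flat_abs; [apply lle_refl| unfold tmap; cbn; rewrite V; reflexivity]].
      cbn [app]. rewrite flat_cons.
      rewrite (flat_go_ext _ (tmap Op (fun V0 : val => approx m K2 (CRet V0)) (atree n K' (ch i))));
        [| intros q; unfold tmap, atree; cbn [interp]; rewrite V; reflexivity].
      apply IHn.
Qed.

End Oper2.

Section Oper3.
Variable Op : Type.
Variable ar : Op -> arity.
Notation val := (val Op). Notation comp := (comp Op).
Notation tyv := (tyv ar). Notation tyc := (tyc ar).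
Notation approx := (approx ar).
Notation rtree := (rtree Op).
Notation valid_child := (valid_child Op ar).
Notation step := (step Op). Notation interp := (interp Op ar).
Notation otree := (otree Op ar). Notation atree := (atree Op ar).
Notation lle := (lle Op).
Notation wf := (wf Op ar).

Lemma tmap_lle2 {X Y} (f : X -> rtree Y) (t t' : rtree X) :
  (forall q, lle (t q) (t' q)) -> forall q, lle2 Op (tmap Op f t q) (tmap Op f t' q).
Proof.
  intros H q. unfold tmap, lle2. destruct (H q) as [E|[E|E]]; rewrite E; auto.
Qed.

Lemma cont_core K K2 M : forall p q l,
  flat_go (tmap Op (fun V => otree K2 (CRet V)) (otree K M)) q p = l -> l <> LBot -> l <> LAbs ->
  exists n m, flat_go (tmap Op (fun V => approx m K2 (CRet V)) (atree n K M)) q p = l.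
Proof.
  induction p as [|i p IH]; intros q l; cbn [flat_go]; unfold tmap at 1;
  destruct (otree K M q) as [| |V|s m0] eqn:E; intros H1 H2 H3; try congruence.
  - destruct (otree_inv Op ar K2 (CRet V) [] ) as [m Hm]; try congruence.
    destruct (otree_inv Op ar K M q) as [n Hn]; try congruence.
    exists n, m. cbn [flat_go]. unfold tmap, atree. rewrite Hn, E. congruence.
  - destruct (otree_inv Op ar K M q) as [n Hn]; try congruence.
    exists n, 0. cbn [flat_go]. unfold tmap, atree. rewrite Hn, E. congruence.
  - destruct (otree_inv Op ar K2 (CRet V) (i :: p)) as [m Hm]; try congruence.
    destruct (otree_inv Op ar K M q) as [n Hn]; try congruence.
    exists n, m. cbn [flat_go]. unfold tmap at 1. unfold atree. rewrite Hn, E. congruence.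
  - destruct (otree_inv Op ar K M q) as [n0 Hn0]; try congruence.
    destruct (IH (q ++ [i]) l H1 H2 H3) as (n1 & m & Hn1).
    exists (n0 + n1), m. cbn [flat_go]. unfold tmap at 1. unfold atree at 1.
    rewrite (approx_stable Op ar n0 (n0 + n1)); try lia; try congruence.
    rewrite Hn0, E.
    apply lle_val; try congruence. rewrite <- Hn1. apply flat_go_mono. apply tmap_lle2.
    intros q'. apply approx_mono_le. lia.
Qed.

Lemma otree_join K K2 M :
  tle_cpo (flatten (tmap Op (fun V => otree K2 (CRet V)) (otree K M))) (otree (K ++ K2) M).
Proof.
  apply tle_otree. intros p H1 H2. unfold flatten in *.
  destruct (cont_core K K2 M p [] _ eq_refl H1 H2) as (n & m & H).
  exists (n + m). apply lle_val; auto.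
  rewrite <- H. apply (join_le Op ar n m K K2 M p).
Qed.

Definition nodetree {X} (s : Op) (m : option nat) (f : nat -> X) : rtree X :=
  fun p => match p with
           | [] => LNode s m
           | [i] => if valid_child s i then LLeaf (f i) else LAbs
           | _ => LAbs end.

Definition leaftree {X} (x : X) : rtree X :=
  fun p => match p with [] => LLeaf x | _ => LAbs end.

Lemma atree_node n K M s m K' ch : step K M = RNode Op s m K' ch ->
  atree (S n) K M = flatten (nodetree s m (fun i => atree n K' (ch i))).
Proof.
  intros E. rewrite atree_S, E. extensionality p. unfold flatten.
  destruct p as [|i p]; [reflexivity|].
  simpl. destruct (valid_child s i) eqn:V; destruct p; simpl; rewrite ?V; reflexivity.
Qed.

Lemma flat_nodetree {X} s m (f : nat -> rtree X) i p :
  flatten (nodetree s m f) (i :: p) = if valid_child s i then f i p else LAbs.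
Proof.
  unfold flatten. simpl. destruct (valid_child s i) eqn:V; destruct p; simpl; rewrite ?V; reflexivity.
Qed.

Lemma otree_node K M s m K' ch : step K M = RNode Op s m K' ch ->
  tle_cpo (flatten (nodetree s m (fun i => otree K' (ch i)))) (otree K M).
Proof.
  intros E. apply tle_otree. intros p H1 H2.
  destruct p as [|i p].
  - exists 1. rewrite approx_step, E. reflexivity.
  - rewrite flat_nodetree in *. destruct (valid_child s i) eqn:V; [|congruence].
    destruct (otree_inv Op ar K' (ch i) p H1 H2) as [n Hn].
    exists (S n). rewrite approx_step, E. cbn [interp]. rewrite V. auto.
Qed.

Lemma atree_done n V : atree (S n) [] (CRet V) = leaftree V.
Proof. extensionality p. unfold atree. rewrite approx_step. reflexivity. Qed.

Lemma otree_done V : tle_cpo (leaftree V) (otree [] (CRet V)).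
Proof.
  apply tle_otree. intros p H1 H2. exists 1. rewrite approx_step. reflexivity.
Qed.

Lemma wf_nodetree {X} (P : X -> Prop) s m (f : nat -> X) :
  (is_param Op ar s = true <-> m <> None) -> (forall i, valid_child s i = true -> P (f i)) ->
  wf P (nodetree s m f).
Proof.
  intros H1 H2. unfold nodetree. split; [|split; [|split]].
  - congruence.
  - intros p i; split.
    + intros Z. destruct p as [|j [|k p]]; simpl in Z.
      * destruct (valid_child s i) eqn:V; try congruence. eauto.
      * congruence.
      * congruence.
    + intros (s0 & m0 & E & V). destruct p as [|j p]; [|destruct p; [destruct (valid_child s j); discriminate|discriminate]].
      injection E; intros; subst. simpl. rewrite V. congruence.
  - intros p s0 m0 E. destruct p as [|j [|k p]]; try discriminate.
    + injection E; intros; subst; auto.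
    + destruct (valid_child s j); discriminate.
  - intros p x E. destruct p as [|j [|k p]]; try discriminate.
    destruct (valid_child s j) eqn:V; try discriminate. injection E; intros; subst; auto.
Qed.

Lemma wf_leaftree {X} (P : X -> Prop) x : P x -> wf P (leaftree x).
Proof.
  intros H. unfold leaftree. split; [|split; [|split]].
  - congruence.
  - intros p i; split.
    + destruct p; simpl; congruence.
    + intros (?&?&E&_). destruct p; discriminate.
  - intros p s m E; destruct p; discriminate.
  - intros p y E; destruct p; try discriminate. injection E; intros; subst; auto.
Qed.

Lemma let_left n M1 M2 :
  tle_cpo (atree (S n) [] (CLet M1 M2))
          (flatten (tmap Op (fun V => atree n [] (subst0 M2 V)) (atree n [] M1))).
Proof.
  intros p. unfold atree at 1. rewrite approx_step. cbn [step interp].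
  eapply lle_trans; [apply (split_le Op ar n [] [M2] M1 p)|].
  apply flatten_map_mono. intros V q. unfold atree. destruct n.
  - apply lle_refl.
  - rewrite approx_step. cbn [step interp]. apply approx_mono.
Qed.

Lemma let_right N1 N2 :
  tle_cpo (flatten (tmap Op (fun W => otree [] (subst0 N2 W)) (otree [] N1)))
          (otree [] (CLet N1 N2)).
Proof.
  intros p. eapply lle_trans.
  - apply (flatten_map_mono Op (fun W => otree [] (subst0 N2 W)) (fun W => otree [N2] (CRet W))).
    intros W. apply otree_sil. reflexivity.
  - eapply lle_trans; [apply (otree_join [] [N2] N1)|].
    apply otree_sil. reflexivity.
Qed.

End Oper3.

Section Sim.
Variable Op : Type.
Variable ar : Op -> arity.
Variable O : Type.
Variable sem : O -> rtree Op unit -> Prop.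
Hypothesis SO : forall o, scott_open Op ar (sem o).

Notation val := (val Op). Notation comp := (comp Op).
Notation tyv := (tyv ar). Notation tyc := (tyc ar).
Notation rtree := (rtree Op).
Notation wf := (wf Op ar). Notation wfT := (wfT Op ar).
Notation otree := (otree Op ar). Notation atree := (atree Op ar).
Notation TS := (TS Op O sem).
Notation modal := (modal Op O sem).
Notation simv := (simv Op ar O sem). Notation simc := (simc Op ar O sem).
Notation osv := (openv Op ar simv). Notation osc := (openc Op ar simc).
Notation tyd := (tyd Op ar).

Lemma tycfg_nil M t : tyc [] M t -> tycfg Op ar [] M t.
Proof. intros H; exists t; split; auto; constructor. Qed.

Lemma wf_optree M t : tyc [] M t -> wf (tyd t) (optree ar M).
Proof. intros H. apply wf_otree, tycfg_nil; auto. Qed.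

Lemma wfT_optree M t : tyc [] M t -> wfT (optree ar M).
Proof. intros H. eapply wfT_of, wf_optree; eauto. Qed.

Lemma restrict_dom {X} (D A : X -> Prop) (t : rtree X) :
  wf D t -> restrict A t = restrict (fun x => A x /\ D x) t.
Proof.
  intros (_ & _ & _ & H). extensionality p. unfold restrict.
  destruct (t p) eqn:E; auto. specialize (H _ _ E).
  destruct (excluded_middle_informative (A x)), (excluded_middle_informative (A x /\ D x)); tauto.
Qed.

Lemma TS_of_tsim {X Y} (D : X -> Prop) (R : X -> Y -> Prop) (t : rtree X) (t' : rtree Y) :
  tsim Op O sem D R t t' -> wf D t -> wfT t' -> TS R t t'.
Proof.
  intros H W W' A o HA. unfold modal in HA. rewrite (restrict_dom D A t W) in HA.
  apply H in HA; [|intros x [_ Hx]; auto].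
  eapply modal_mono; [exact SO|exact W'| |exact HA].
  intros y (x & (Ax & _) & R'); eauto.
Qed.

Lemma sim_TS t M N : simc t M N -> TS (simv t) (optree ar M) (optree ar N).
Proof.
  intros (Rv & Rc & S & H).
  destruct (sim_tyc _ _ _ _ _ _ S _ _ _ H) as [T1 T2].
  eapply TS_mono; [exact SO|eapply wfT_optree; eauto| |].
  2: { eapply TS_of_tsim; [apply (sim_comp _ _ _ _ _ _ S _ _ _ H)|apply wf_optree; auto|
       eapply wfT_optree; eauto]. }
  intros x y Hxy. exists Rv, Rc; auto.
Qed.

Lemma sim_id : simulation Op ar O sem (fun t V W => V = W /\ tyv [] V t) (fun t M N => M = N /\ tyc [] M t).
Proof.
  constructor.
  - intros t V W [-> H]; auto.
  - intros t M N [-> H]; auto.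
  - intros V W [-> _]; auto.
  - intros t M N [-> H] A HA o Ho. eapply modal_ext; [|exact Ho].
    intros y; split; [intros Ay; exists y; auto|]. intros (x & Ax & -> & _); auto.
  - intros t1 t V W [-> H] U HU. split; auto. econstructor; eauto.
Qed.

Lemma simv_refl t V : tyv [] V t -> simv t V V.
Proof. intros H. do 2 eexists; split; [apply sim_id|]; simpl; auto. Qed.
Lemma simc_refl t M : tyc [] M t -> simc t M M.
Proof. intros H. do 2 eexists; split; [apply sim_id|]; simpl; auto. Qed.

Lemma sim_compose Rv1 Rc1 Rv2 Rc2 :
  simulation Op ar O sem Rv1 Rc1 -> simulation Op ar O sem Rv2 Rc2 ->
  simulation Op ar O sem (fun t x z => exists y, Rv1 t x y /\ Rv2 t y z)
                         (fun t x z => exists y, Rc1 t x y /\ Rc2 t y z).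
Proof.
  intros S1 S2. constructor.
  - intros t V W (U & H1 & H2). split; [exact (proj1 (sim_tyv _ _ _ _ _ _ S1 _ _ _ H1))|exact (proj2 (sim_tyv _ _ _ _ _ _ S2 _ _ _ H2))].
  - intros t V W (U & H1 & H2). split; [exact (proj1 (sim_tyc _ _ _ _ _ _ S1 _ _ _ H1))|exact (proj2 (sim_tyc _ _ _ _ _ _ S2 _ _ _ H2))].
  - intros V W (U & H1 & H2). apply (sim_nat _ _ _ _ _ _ S1) in H1. apply (sim_nat _ _ _ _ _ _ S2) in H2. congruence.
  - intros t M N (M1 & H1 & H2) A HA o Ho.
    apply (sim_comp _ _ _ _ _ _ S1 _ _ _ H1) in Ho; auto.
    apply (sim_comp _ _ _ _ _ _ S2 _ _ _ H2) in Ho.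
    + eapply modal_ext; [|exact Ho]. intros z; split.
      * intros (y & (x & Ax & R1) & R2); eauto.
      * intros (x & Ax & (y & R1 & R2)); eauto.
    + intros y (x & Ax & R1). exact (proj2 (sim_tyv _ _ _ _ _ _ S1 _ _ _ R1)).
  - intros t1 t V W (U & H1 & H2) X HX. eexists; split.
    + eapply (sim_app _ _ _ _ _ _ S1); eauto.
    + eapply (sim_app _ _ _ _ _ _ S2); eauto.
Qed.

Lemma simv_trans t V U W : simv t V U -> simv t U W -> simv t V W.
Proof.
  intros (R1 & C1 & S1 & H1) (R2 & C2 & S2 & H2). do 2 eexists; split.
  - apply (sim_compose _ _ _ _ S1 S2).
  - simpl; eauto.
Qed.
Lemma simc_trans t V U W : simc t V U -> simc t U W -> simc t V W.
Proof.
  intros (R1 & C1 & S1 & H1) (R2 & C2 & S2 & H2). do 2 eexists; split.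
  - apply (sim_compose _ _ _ _ S1 S2).
  - simpl; eauto.
Qed.

Lemma simv_ty t V W : simv t V W -> tyv [] V t /\ tyv [] W t.
Proof. intros (R & C & S & H). eapply (sim_tyv _ _ _ _ _ _ S); eauto. Qed.
Lemma simc_ty t V W : simc t V W -> tyc [] V t /\ tyc [] W t.
Proof. intros (R & C & S & H). eapply (sim_tyc _ _ _ _ _ _ S); eauto. Qed.

Lemma simv_nat V W : simv TNat V W -> V = W.
Proof. intros (R & C & S & H). eapply (sim_nat _ _ _ _ _ _ S); eauto. Qed.

Lemma simv_app t1 t V W U : simv (TArr t1 t) V W -> tyv [] U t1 -> simc t (CApp V U) (CApp W U).
Proof. intros (R & C & S & H) HU. do 2 eexists; split; eauto. eapply (sim_app _ _ _ _ _ _ S); eauto. Qed.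

Lemma Forall2_nth_error {A B} (P : A -> B -> Prop) l1 l2 n b :
  Forall2 P l1 l2 -> nth_error l2 n = Some b -> exists a, nth_error l1 n = Some a /\ P a b.
Proof.
  intros H; revert n; induction H; intros [|n] E; simpl in *; try discriminate.
  - injection E; intros; subst; eauto.
  - eauto.
Qed.

Lemma sb_inst G sg : Forall2 (fun U a => tyv [] U a) sg G -> sb Op ar G [] (inst sg).
Proof.
  intros H n a E. destruct (Forall2_nth_error _ _ _ _ _ H E) as (U & E1 & HU).
  unfold inst. rewrite (nth_error_nth _ _ _ E1). auto.
Qed.

Lemma Forall2_map_seq G k (s : nat -> val) :
  (forall n a, nth_error G n = Some a -> tyv [] (s (k + n)) a) ->
  Forall2 (fun U a => tyv [] U a) (map s (seq k (length G))) G.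
Proof.
  revert k; induction G as [|a G IH]; intros k H; simpl; constructor.
  - specialize (H 0 a eq_refl). rewrite Nat.add_0_r in H; auto.
  - apply IH. intros n b E. replace (S k + n) with (k + S n) by lia. apply H. auto.
Qed.

Lemma inst_agr (G : list ty) (s : nat -> val) : agr Op (length G) (inst (map s (seq 0 (length G)))) s.
Proof.
  intros n Hn. unfold inst. rewrite nth_indep with (d' := s 0).
  - rewrite map_nth, seq_nth; auto.
  - rewrite length_map, length_seq; auto.
Qed.

Lemma openv_iff (R : ty -> val -> val -> Prop) G t V W :
  openv Op ar R G t V W <-> tyv G V t /\ tyv G W t /\
    forall s, sb Op ar G [] s -> R t (sub_v s V) (sub_v s W).
Proof.
  split.
  - intros (H1 & H2 & H3). split; [auto|split; [auto|]]. intros s Hs.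
    specialize (H3 (map s (seq 0 (length G)))).
    rewrite !((proj1 (ty_agree Op ar)) _ _ _ H1 _ _ (inst_agr G s)) in H3.
    rewrite !((proj1 (ty_agree Op ar)) _ _ _ H2 _ _ (inst_agr G s)) in H3.
    apply H3. apply Forall2_map_seq. auto.
  - intros (H1 & H2 & H3). split; [auto|split; [auto|]]. intros sg Hsg.
    apply H3. apply sb_inst; auto.
Qed.

Lemma openc_iff (R : ty -> comp -> comp -> Prop) G t V W :
  openc Op ar R G t V W <-> tyc G V t /\ tyc G W t /\
    forall s, sb Op ar G [] s -> R t (sub_c s V) (sub_c s W).
Proof.
  split.
  - intros (H1 & H2 & H3). split; [auto|split; [auto|]]. intros s Hs.
    specialize (H3 (map s (seq 0 (length G)))).
    rewrite !((proj2 (ty_agree Op ar)) _ _ _ H1 _ _ (inst_agr G s)) in H3.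
    rewrite !((proj2 (ty_agree Op ar)) _ _ _ H2 _ _ (inst_agr G s)) in H3.
    apply H3. apply Forall2_map_seq. auto.
  - intros (H1 & H2 & H3). split; [auto|split; [auto|]]. intros sg Hsg.
    apply H3. apply sb_inst; auto.
Qed.

Lemma sb_comp G D s s1 : sb Op ar G D s -> sb Op ar D [] s1 ->
  sb Op ar G [] (fun n => sub_v s1 (s n)).
Proof. intros H1 H2 n a E. eapply (proj1 (ty_sub Op ar)); eauto. Qed.

Lemma osv_refl G t V : tyv G V t -> osv G t V V.
Proof.
  intros H. apply openv_iff. split; [auto|split; [auto|]]. intros s Hs.
  apply simv_refl. eapply (proj1 (ty_sub Op ar)); eauto.
Qed.
Lemma osc_refl G t V : tyc G V t -> osc G t V V.
Proof.
  intros H. apply openc_iff. split; [auto|split; [auto|]]. intros s Hs.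
  apply simc_refl. eapply (proj2 (ty_sub Op ar)); eauto.
Qed.

Lemma osv_trans G t V U W : osv G t V U -> osv G t U W -> osv G t V W.
Proof.
  rewrite !openv_iff. intros (A1 & A2 & A3) (B1 & B2 & B3). split; [auto|split; [auto|]].
  intros s Hs. eapply simv_trans; eauto.
Qed.
Lemma osc_trans G t V U W : osc G t V U -> osc G t U W -> osc G t V W.
Proof.
  rewrite !openc_iff. intros (A1 & A2 & A3) (B1 & B2 & B3). split; [auto|split; [auto|]].
  intros s Hs. eapply simc_trans; eauto.
Qed.

Lemma osv_subst G D t V W s : osv G t V W -> sb Op ar G D s -> osv D t (sub_v s V) (sub_v s W).
Proof.
  rewrite !openv_iff. intros (A1 & A2 & A3) Hs.
  split; [eapply (proj1 (ty_sub Op ar)); eauto|split; [eapply (proj1 (ty_sub Op ar)); eauto|]].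
  intros s1 Hs1. rewrite !(proj1 (sub_sub Op)). apply A3. eapply sb_comp; eauto.
Qed.
Lemma osc_subst G D t V W s : osc G t V W -> sb Op ar G D s -> osc D t (sub_c s V) (sub_c s W).
Proof.
  rewrite !openc_iff. intros (A1 & A2 & A3) Hs.
  split; [eapply (proj2 (ty_sub Op ar)); eauto|split; [eapply (proj2 (ty_sub Op ar)); eauto|]].
  intros s1 Hs1. rewrite !(proj2 (sub_sub Op)). apply A3. eapply sb_comp; eauto.
Qed.

Lemma sb_ren G D xi : rn G D xi -> sb Op ar G D (fun n => VVar (xi n)).
Proof. intros H n a E. constructor. auto. Qed.

Lemma osv_ren G D t V W xi : osv G t V W -> rn G D xi -> osv D t (ren_v xi V) (ren_v xi W).
Proof. intros H R. rewrite !(proj1 (ren_as_sub Op)). eapply osv_subst; eauto using sb_ren. Qed.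
Lemma osc_ren G D t V W xi : osc G t V W -> rn G D xi -> osc D t (ren_c xi V) (ren_c xi W).
Proof. intros H R. rewrite !(proj2 (ren_as_sub Op)). eapply osc_subst; eauto using sb_ren. Qed.

Lemma sb_nil : sb Op ar [] [] VVar.
Proof. intros n a E; destruct n; discriminate. Qed.

Lemma osv_closed t V W : osv [] t V W -> simv t V W.
Proof.
  rewrite openv_iff. intros (A1 & A2 & A3). specialize (A3 _ sb_nil).
  rewrite !(proj1 (sub_id Op)) in A3. auto.
Qed.
Lemma osc_closed t V W : osc [] t V W -> simc t V W.
Proof.
  rewrite openc_iff. intros (A1 & A2 & A3). specialize (A3 _ sb_nil).
  rewrite !(proj2 (sub_id Op)) in A3. auto.
Qed.
Lemma closed_osv t V W : simv t V W -> osv [] t V W.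
Proof.
  intros H. destruct (simv_ty _ _ _ H) as [T1 T2]. rewrite openv_iff.
  split; [auto|split; [auto|]]. intros s _. rewrite !(closed_sub_v Op ar _ t); auto.
Qed.

Lemma osv_ty G t V W : osv G t V W -> tyv G V t /\ tyv G W t.
Proof. intros (A & B & _); auto. Qed.
Lemma osc_ty G t V W : osc G t V W -> tyc G V t /\ tyc G W t.
Proof. intros (A & B & _); auto. Qed.

End Sim.

Section Howe.
Variable Op : Type.
Variable ar : Op -> arity.
Variable O : Type.
Variable sem : O -> rtree Op unit -> Prop.

Notation val := (val Op). Notation comp := (comp Op).
Notation tyv := (tyv ar). Notation tyc := (tyc ar).
Notation simv := (simv Op ar O sem). Notation simc := (simc Op ar O sem).
Notation osv := (openv Op ar simv). Notation osc := (openc Op ar simc).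
Notation dft := (@CRet Op VStar).

Inductive HV : list ty -> ty -> val -> val -> Prop :=
  | HV_var G n t W : nth_error G n = Some t -> osv G t (VVar n) W -> HV G t (VVar n) W
  | HV_star G W : osv G TUnit VStar W -> HV G TUnit VStar W
  | HV_zero G W : osv G TNat VZ W -> HV G TNat VZ W
  | HV_succ G V V' W : HV G TNat V V' -> osv G TNat (VS V') W -> HV G TNat (VS V) W
  | HV_lam G t r M M' W : HC (t :: G) r M M' -> osv G (TArr t r) (VLam t M') W ->
      HV G (TArr t r) (VLam t M) W
with HC : list ty -> ty -> comp -> comp -> Prop :=
  | HC_app G t r V V' U U' N : HV G (TArr t r) V V' -> HV G t U U' ->
      osc G r (CApp V' U') N -> HC G r (CApp V U) N
  | HC_ret G t V V' N : HV G t V V' -> osc G t (CRet V') N -> HC G t (CRet V) N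
  | HC_let G t r M M' K K' N : HC G t M M' -> HC (t :: G) r K K' ->
      osc G r (CLet M' K') N -> HC G r (CLet M K) N
  | HC_fix G t r V V' N : HV G (TArr (TArr t r) (TArr t r)) V V' ->
      osc G (TArr t r) (CFix V') N -> HC G (TArr t r) (CFix V) N
  | HC_case G t V V' M M' K K' N : HV G TNat V V' -> HC G t M M' -> HC (TNat :: G) t K K' ->
      osc G t (CCase V' M' K') N -> HC G t (CCase V M K) N
  | HC_op G t s Ms Ns N : ar s = AFin (length Ms) -> length Ns = length Ms ->
      (forall i, i < length Ms -> HC G t (nth i Ms dft) (nth i Ns dft)) ->
      osc G t (COp s Ns) N -> HC G t (COp s Ms) N
  | HC_opP G t s V V' Ms Ns N : ar s = APFin (length Ms) -> HV G TNat V V' ->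
      length Ns = length Ms ->
      (forall i, i < length Ms -> HC G t (nth i Ms dft) (nth i Ns dft)) ->
      osc G t (COpP s V' Ns) N -> HC G t (COpP s V Ms) N
  | HC_opC G t s V V' N : ar s = ACount -> HV G (TArr TNat t) V V' ->
      osc G t (COpC s V') N -> HC G t (COpC s V) N
  | HC_opPC G t s V V' W W' N : ar s = APCount -> HV G TNat V V' -> HV G (TArr TNat t) W W' ->
      osc G t (COpPC s V' W') N -> HC G t (COpPC s V W) N.

Scheme HV_mind := Induction for HV Sort Prop with HC_mind := Induction for HC Sort Prop.
Combined Scheme H_mind from HV_mind, HC_mind.

Lemma in_nth_ty G t Ms : (forall i, i < length Ms -> tyc G (nth i Ms dft) t) ->
  forall M, In M Ms -> tyc G M t.
Proof.
  intros H M HM. destruct (In_nth Ms M dft HM) as (i & Hi & E). rewrite <- E. auto.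
Qed.

Lemma H_ty :
  (forall G t V W, HV G t V W -> tyv G V t /\ tyv G W t) /\
  (forall G t M N, HC G t M N -> tyc G M t /\ tyc G N t).
Proof.
  apply (H_mind (fun G t V W _ => tyv G V t /\ tyv G W t) (fun G t M N _ => tyc G M t /\ tyc G N t));
  intros; repeat match goal with H : _ /\ _ |- _ => destruct H end;
  try match goal with H : osv _ _ _ _ |- _ => destruct (osv_ty _ _ _ _ _ _ _ _ H) end;
  try match goal with H : osc _ _ _ _ |- _ => destruct (osc_ty _ _ _ _ _ _ _ _ H) end;
  split; auto; try (econstructor; eauto; fail).
  - econstructor; eauto. apply in_nth_ty. intros i Hi. apply H; auto.
  - econstructor; eauto. apply in_nth_ty. intros i Hi. apply H0; auto.
Qed.

Lemma H_os :
  (forall G t V W, HV G t V W -> forall U, osv G t W U -> HV G t V U) /\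
  (forall G t M N, HC G t M N -> forall U, osc G t N U -> HC G t M U).
Proof.
  split; intros G t V W H U HU; destruct H; econstructor; eauto using osv_trans, osc_trans.
Qed.

Lemma H_refl :
  (forall G V t, tyv G V t -> HV G t V V) /\ (forall G M t, tyc G M t -> HC G t M M).
Proof.
  apply (ty_mind Op ar (fun G V t _ => HV G t V V) (fun G M t _ => HC G t M M));
  intros; econstructor; eauto;
  try (apply osv_refl; econstructor; eauto; fail);
  try (apply osc_refl; econstructor; eauto; fail).
  - intros i Hi. apply H. apply nth_In; auto.
  - intros i Hi. apply H0. apply nth_In; auto.
Qed.

Lemma osv_H G t V W : osv G t V W -> HV G t V W.
Proof.
  intros H. apply (proj1 H_os _ _ V V); auto. apply (proj1 H_refl). apply (osv_ty _ _ _ _ _ _ _ _ H).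
Qed.
Lemma osc_H G t V W : osc G t V W -> HC G t V W.
Proof.
  intros H. apply (proj2 H_os _ _ V V); auto. apply (proj2 H_refl). apply (osc_ty _ _ _ _ _ _ _ _ H).
Qed.

Lemma HV_ty G t V W : HV G t V W -> tyv G V t /\ tyv G W t.
Proof. apply (proj1 H_ty). Qed.
Lemma HC_ty G t V W : HC G t V W -> tyc G V t /\ tyc G W t.
Proof. apply (proj2 H_ty). Qed.

Ltac tyH := repeat match goal with
  | H : HV _ _ _ _ |- _ => let T1 := fresh "T" in let T2 := fresh "T" in
       destruct (HV_ty _ _ _ _ H) as [T1 T2]; revert H
  | H : HC _ _ _ _ |- _ => let T1 := fresh "T" in let T2 := fresh "T" in
       destruct (HC_ty _ _ _ _ H) as [T1 T2]; revert H
  end; intros.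

Lemma nth_map_d (f : comp -> comp) l i : f dft = dft -> nth i (map f l) dft = f (nth i l dft).
Proof. intros H. rewrite <- H at 1. apply map_nth. Qed.

Lemma Hc_app G t r V V' U U' : HV G (TArr t r) V V' -> HV G t U U' -> HC G r (CApp V U) (CApp V' U').
Proof. intros; tyH. econstructor; eauto. apply osc_refl. econstructor; eauto. Qed.
Lemma Hc_ret G t V V' : HV G t V V' -> HC G t (CRet V) (CRet V').
Proof. intros; tyH. econstructor; eauto. apply osc_refl. econstructor; eauto. Qed.
Lemma Hc_let G t r M M' K K' : HC G t M M' -> HC (t :: G) r K K' -> HC G r (CLet M K) (CLet M' K').
Proof. intros; tyH. econstructor; eauto. apply osc_refl. econstructor; eauto. Qed.
Lemma Hc_fix G t r V V' : HV G (TArr (TArr t r) (TArr t r)) V V' -> HC G (TArr t r) (CFix V) (CFix V').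
Proof. intros; tyH. econstructor; eauto. apply osc_refl. econstructor; eauto. Qed.
Lemma Hc_case G t V V' M M' K K' : HV G TNat V V' -> HC G t M M' -> HC (TNat :: G) t K K' ->
  HC G t (CCase V M K) (CCase V' M' K').
Proof. intros; tyH. econstructor; eauto. apply osc_refl. econstructor; eauto. Qed.
Lemma Hc_opC G t s V V' : ar s = ACount -> HV G (TArr TNat t) V V' -> HC G t (COpC s V) (COpC s V').
Proof. intros; tyH. econstructor; eauto. apply osc_refl. econstructor; eauto. Qed.
Lemma Hc_opPC G t s V V' W W' : ar s = APCount -> HV G TNat V V' -> HV G (TArr TNat t) W W' ->
  HC G t (COpPC s V W) (COpPC s V' W').
Proof. intros; tyH. econstructor; eauto. apply osc_refl. econstructor; eauto. Qed.
Lemma Hc_op G t s Ms Ns : ar s = AFin (length Ms) -> length Ns = length Ms ->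
  (forall i, i < length Ms -> HC G t (nth i Ms dft) (nth i Ns dft)) -> HC G t (COp s Ms) (COp s Ns).
Proof.
  intros E L H. econstructor; eauto. apply osc_refl. econstructor; [congruence|].
  apply in_nth_ty. intros i Hi. apply (HC_ty _ _ _ _ (H i ltac:(lia))).
Qed.
Lemma Hc_opP G t s V V' Ms Ns : ar s = APFin (length Ms) -> HV G TNat V V' -> length Ns = length Ms ->
  (forall i, i < length Ms -> HC G t (nth i Ms dft) (nth i Ns dft)) -> HC G t (COpP s V Ms) (COpP s V' Ns).
Proof.
  intros E HVV L H. econstructor; eauto. apply osc_refl. econstructor; [congruence| apply (HV_ty _ _ _ _ HVV)|].
  apply in_nth_ty. intros i Hi. apply (HC_ty _ _ _ _ (H i ltac:(lia))).
Qed.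
Lemma Hc_lam G t r M M' : HC (t :: G) r M M' -> HV G (TArr t r) (VLam t M) (VLam t M').
Proof. intros; tyH. econstructor; eauto. apply osv_refl. econstructor; eauto. Qed.
Lemma Hc_succ G V V' : HV G TNat V V' -> HV G TNat (VS V) (VS V').
Proof. intros; tyH. econstructor; eauto. apply osv_refl. econstructor; eauto. Qed.

Lemma H_ren :
  (forall G t V W, HV G t V W -> forall D xi, rn G D xi -> HV D t (ren_v xi V) (ren_v xi W)) /\
  (forall G t M N, HC G t M N -> forall D xi, rn G D xi -> HC D t (ren_c xi M) (ren_c xi N)).
Proof.
  apply (H_mind (fun G t V W _ => forall D xi, rn G D xi -> HV D t (ren_v xi V) (ren_v xi W))
                (fun G t M N _ => forall D xi, rn G D xi -> HC D t (ren_c xi M) (ren_c xi N)));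
  intros; simpl.
  1: { eapply HV_var; [apply H; exact e|]. apply (osv_ren Op ar O sem _ _ _ _ _ _ o); auto. }
  all: econstructor.
  all: try (match goal with H : osv _ _ _ _ |- osv _ _ _ _ => apply (osv_ren Op ar O sem _ _ _ _ _ _ H); eauto end).
  all: try (match goal with H : osc _ _ _ _ |- osc _ _ _ _ => apply (osc_ren Op ar O sem _ _ _ _ _ _ H); eauto end).
  all: rewrite ?length_map; eauto using rn_up.
  all: intros i Hi; rewrite !nth_map_d; auto.
Qed.

Definition sbH G D (s s' : nat -> val) := forall n a, nth_error G n = Some a -> HV D a (s n) (s' n).

Lemma sbH_up G D s s' t : sbH G D s s' -> sbH (t :: G) (t :: D) (upsub s) (upsub s').
Proof.
  intros H [|n] a E; simpl in *.
  - injection E; intros; subst. apply (proj1 H_refl). constructor; auto.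
  - apply (proj1 H_ren _ _ _ _ (H n a E)). intros k b Ek; simpl; auto.
Qed.

Lemma sbH_sb G D s s' : sbH G D s s' -> sb Op ar G D s'.
Proof. intros H n a E. apply (HV_ty _ _ _ _ (H n a E)). Qed.

Lemma H_sub :
  (forall G t V W, HV G t V W -> forall D s s', sbH G D s s' -> HV D t (sub_v s V) (sub_v s' W)) /\
  (forall G t M N, HC G t M N -> forall D s s', sbH G D s s' -> HC D t (sub_c s M) (sub_c s' N)).
Proof.
  apply (H_mind (fun G t V W _ => forall D s s', sbH G D s s' -> HV D t (sub_v s V) (sub_v s' W))
                (fun G t M N _ => forall D s s', sbH G D s s' -> HC D t (sub_c s M) (sub_c s' N)));
  intros; simpl.
  1: { apply (proj1 H_os _ _ _ _ (H _ _ e)).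
       apply (osv_subst Op ar O sem _ _ _ _ _ _ o). eapply sbH_sb; eauto. }
  all: econstructor.
  all: try (match goal with H : osv _ _ _ _ |- osv _ _ _ _ => apply (osv_subst Op ar O sem _ _ _ _ _ _ H); eapply sbH_sb; eauto end).
  all: try (match goal with H : osc _ _ _ _ |- osc _ _ _ _ => apply (osc_subst Op ar O sem _ _ _ _ _ _ H); eapply sbH_sb; eauto end).
  all: rewrite ?length_map; eauto using sbH_up.
  all: intros i Hi; rewrite !nth_map_d; auto.
Qed.

Lemma H_nat V W : HV [] TNat V W -> V = W.
Proof.
  revert W; induction V; intros W H; inversion H; subst.
  - apply (simv_nat Op ar O sem). apply osv_closed; auto.
  - match goal with H1 : HV _ _ V _ |- _ => apply IHV in H1 end. subst. apply (simv_nat Op ar O sem). apply osv_closed; auto.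
  - destruct n; discriminate.
Qed.

End Howe.

Section Key.
Variable Op : Type.
Variable ar : Op -> arity.
Variable O : Type.
Variable sem : O -> rtree Op unit -> Prop.
Hypothesis SO : forall o, scott_open Op ar (sem o).
Hypothesis DEC : decomposable Op ar O sem.

Notation val := (val Op). Notation comp := (comp Op).
Notation tyv := (tyv ar). Notation tyc := (tyc ar).
Notation rtree := (rtree Op).
Notation wf := (wf Op ar). Notation wfT := (wfT Op ar).
Notation otree := (otree Op ar). Notation atree := (atree Op ar).
Notation TS := (TS Op O sem).
Notation simv := (simv Op ar O sem). Notation simc := (simc Op ar O sem).
Notation osv := (openv Op ar simv). Notation osc := (openc Op ar simc).
Notation tyd := (tyd Op ar).
Notation HV := (HV Op ar O sem). Notation HC := (HC Op ar O sem).
Notation step := (step Op). Notation nodetree := (nodetree Op ar).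
Notation dft := (@CRet Op VStar).

Definition Hc t := fun V W => HV [] t V W.

Lemma wfa n M t : tyc [] M t -> wf (tyd t) (atree n [] M).
Proof. intros H; apply wf_atree, (tycfg_nil Op ar); auto. Qed.
Lemma wfo M t : tyc [] M t -> wf (tyd t) (otree [] M).
Proof. intros H; apply wf_otree, (tycfg_nil Op ar); auto. Qed.
Lemma wfTa n M t : tyc [] M t -> wfT (atree n [] M).
Proof. intros H; eapply wfT_of, wfa; eauto. Qed.
Lemma wfTo M t : tyc [] M t -> wfT (otree [] M).
Proof. intros H; eapply wfT_of, wfo; eauto. Qed.

Lemma finish t {X} (x : rtree X) N1 N (R : X -> val -> Prop) :
  (forall a b c, R a b -> simv t b c -> R a c) ->
  TS R x (otree [] N1) -> simc t N1 N -> TS R x (otree [] N).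
Proof.
  intros HR H1 H2. destruct (simc_ty _ _ _ _ _ _ _ H2) as [T1 T2].
  eapply (TS_mono Op ar O sem SO); [eapply wfTo; eauto| |].
  2: { apply (TS_comp Op O sem R (simv t) _ _ _ H1). exact (sim_TS Op ar O sem SO _ _ _ H2). }
  intros a c (b & Hab & Hbc). eauto.
Qed.

Lemma Hc_sim t a b c : Hc t a b -> simv t b c -> Hc t a c.
Proof. intros H1 H2. apply (proj1 (H_os Op ar O sem) _ _ _ _ H1). apply closed_osv; auto. Qed.

Definition IH n := forall t M N, HC [] t M N -> TS (Hc t) (atree n [] M) (otree [] N).

Lemma bott_case n t M N : step [] M = RStuck Op -> tyc [] N t ->
  TS (Hc t) (atree (S n) [] M) (otree [] N).
Proof.
  intros E T. rewrite atree_S, E. apply (TS_bott Op ar O sem SO). eapply wfTo; eauto.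
Qed.

Lemma sil_case n t M M1 M' M1' N : IH n -> step [] M = RSil Op [] M1 -> step [] M' = RSil Op [] M1' ->
  HC [] t M1 M1' -> tyc [] M' t -> simc t M' N -> TS (Hc t) (atree (S n) [] M) (otree [] N).
Proof.
  intros IHn E E' H T S. rewrite atree_S, E. cbn [interp].
  eapply (finish t _ M'); [intros a b c H1 H2; eapply Hc_sim; eauto| |exact S].
  destruct (HC_ty _ _ _ _ _ _ _ _ H) as [T1 T2].
  eapply (TS_le_r Op ar O sem SO); [eapply wfTo; eauto|eapply wfTo; eauto|apply otree_sil; exact E'|].
  apply IHn; auto.
Qed.

Lemma node_case n t M M' N s m ch ch' : IH n ->
  step [] M = RNode Op s m [] ch -> step [] M' = RNode Op s m [] ch' ->
  (is_param Op ar s = true <-> m <> None) ->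
  (forall i, valid_child Op ar s i = true -> HC [] t (ch i) (ch' i)) ->
  tyc [] M' t -> simc t M' N -> TS (Hc t) (atree (S n) [] M) (otree [] N).
Proof.
  intros IHn E E' P HCh T S.
  rewrite (atree_node Op ar n [] M s m [] ch E).
  eapply (finish t _ M'); [intros a b c H1 H2; eapply Hc_sim; eauto| |exact S].
  assert (W1 : wf wfT (nodetree s m (fun i => atree n [] (ch i)))).
  { apply wf_nodetree; auto. intros i Vi. destruct (HC_ty _ _ _ _ _ _ _ _ (HCh i Vi)).
    eapply wfTa; eauto. }
  assert (W2 : wf (wf (tyd t)) (nodetree s m (fun i => otree [] (ch' i)))).
  { apply wf_nodetree; auto. intros i Vi. destruct (HC_ty _ _ _ _ _ _ _ _ (HCh i Vi)).
    eapply wfo; eauto. }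
  assert (W3 : wf wfT (nodetree s m (fun i => otree [] (ch' i)))).
  { eapply wf_weaken; [exact W2|]. intros x Hx. eapply wfT_of; eauto. }
  eapply (TS_le_r Op ar O sem SO).
  - eapply wfT_of. apply wf_flatten. exact W2.
  - eapply wfTo; eauto.
  - apply (otree_node Op ar [] M' s m [] ch' E').
  - eapply (DL Op ar O sem SO); [exact DEC|exact W1|exact W3|].
    eapply (TS_shape Op ar O sem SO); [eapply wfT_of; exact W1|eapply wfT_of; exact W3|].
    intros p. unfold nodetree. destruct p as [|i [|j p]].
    + right; right; left; eauto.
    + destruct (valid_child Op ar s i) eqn:Vi; [|left; auto].
      right; right; right. do 2 eexists; split; [reflexivity|split; [reflexivity|]].
      apply IHn. auto.
    + left; auto.
Qed.

Lemma ret_case n t V V' N : HV [] t V V' -> osc [] t (CRet V') N ->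
  TS (Hc t) (atree (S n) [] (CRet V)) (otree [] N).
Proof.
  intros H S. destruct (HV_ty _ _ _ _ _ _ _ _ H) as [T1 T2].
  rewrite atree_done.
  eapply (finish t _ (CRet V')); [intros a b c H1 H2; eapply Hc_sim; eauto| |apply osc_closed; exact S].
  eapply (TS_le_r Op ar O sem SO).
  - eapply wfT_of. apply (wf_leaftree Op ar (fun _ => True)). auto.
  - eapply wfTo. constructor; eauto.
  - apply otree_done.
  - eapply (TS_shape Op ar O sem SO).
    + eapply wfT_of. apply (wf_leaftree Op ar (fun _ => True)). auto.
    + eapply wfT_of. apply (wf_leaftree Op ar (fun _ => True)). auto.
    + intros p; unfold leaftree; destruct p; [|left; auto].
      right; right; right. eauto.
Qed.

Lemma sbH_scons a V W : HV [] a V W -> sbH Op ar O sem [a] [] (scons Op V VVar) (scons Op W VVar).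
Proof.
  intros H [|k] b E; simpl in *.
  - injection E; intros; subst; auto.
  - destruct k; discriminate.
Qed.

Lemma HC_subst0 a t M M' V W : HC [a] t M M' -> HV [] a V W -> HC [] t (subst0 M V) (subst0 M' W).
Proof.
  intros H1 H2. rewrite !subst0_sub. eapply (proj2 (H_sub Op ar O sem)); eauto using sbH_scons.
Qed.

Lemma let_case n a t M1 M1' M2 M2' N : IH n -> HC [] a M1 M1' -> HC [a] t M2 M2' ->
  osc [] t (CLet M1' M2') N -> TS (Hc t) (atree (S n) [] (CLet M1 M2)) (otree [] N).
Proof.
  intros IHn H1 H2 S.
  destruct (HC_ty _ _ _ _ _ _ _ _ H1) as [T1 T1'].
  destruct (HC_ty _ _ _ _ _ _ _ _ H2) as [T2 T2'].
  assert (W1 : wf wfT (tmap Op (fun V => atree n [] (subst0 M2 V)) (atree n [] M1))).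
  { eapply wf_tmap; [apply (wfa n M1 a); auto|]. intros V HV'. eapply wfTa.
    eapply ty_subst0; eauto. }
  assert (W2 : wf (wf (tyd t)) (tmap Op (fun W => otree [] (subst0 M2' W)) (otree [] M1'))).
  { eapply wf_tmap; [apply (wfo M1' a); auto|]. intros V HV'. eapply wfo.
    eapply ty_subst0; eauto. }
  assert (W3 : wf wfT (tmap Op (fun W => otree [] (subst0 M2' W)) (otree [] M1'))).
  { eapply wf_weaken; [exact W2|]. intros x Hx. eapply wfT_of; eauto. }
  eapply (TS_le_l Op ar O sem SO).
  - eapply wfTa. econstructor; eauto.
  - eapply wfT_of. apply wf_flatten. exact W1.
  - apply let_left.
  - eapply (finish t _ (CLet M1' M2')); [intros x b c Q1 Q2; eapply Hc_sim; eauto| |apply osc_closed; exact S].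
    eapply (TS_le_r Op ar O sem SO).
    + eapply wfT_of. apply wf_flatten. exact W2.
    + eapply wfTo. econstructor; eauto.
    + apply let_right.
    + eapply (DL Op ar O sem SO); [exact DEC|exact W1|exact W3|].
      eapply (TS_map Op ar O sem SO (Hc a)).
      * eapply wfTo; eauto.
      * intros V W HVW. apply IHn. eapply HC_subst0; eauto.
      * apply IHn; auto.
Qed.

Lemma canon_arr V a b : tyv [] V (TArr a b) -> exists B, V = VLam a B.
Proof. intros H; inversion H; subst; eauto. destruct n; discriminate. Qed.

Lemma HV_lam_inv G a t a' B V' : HV G (TArr a t) (VLam a' B) V' ->
  exists B0, HC (a :: G) t B B0 /\ osv G (TArr a t) (VLam a B0) V'.
Proof. intros H; inversion H; subst; eauto. Qed.

Lemma app_case n a t V V' U U' N : IH n -> HV [] (TArr a t) V V' -> HV [] a U U' ->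
  osc [] t (CApp V' U') N -> TS (Hc t) (atree (S n) [] (CApp V U)) (otree [] N).
Proof.
  intros IHn H1 H2 S.
  destruct (HV_ty _ _ _ _ _ _ _ _ H1) as [T1 T1'].
  destruct (HV_ty _ _ _ _ _ _ _ _ H2) as [T2 T2'].
  destruct (osc_ty _ _ _ _ _ _ _ _ S) as [T3 T3'].
  destruct (canon_arr _ _ _ T1) as [B ->].
  destruct (HV_lam_inv _ _ _ _ _ _ H1) as (B0 & HB & HS).
  destruct (HC_ty _ _ _ _ _ _ _ _ HB) as [T4 T4'].
  eapply (sil_case n t _ (subst0 B U) (CApp (VLam a B0) U') (subst0 B0 U')); auto.
  - eapply HC_subst0; eauto.
  - econstructor; eauto. constructor; auto.
  - eapply simc_trans.
    + eapply simv_app; [apply osv_closed; exact HS|exact T2'].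
    + apply osc_closed; exact S.
Qed.

Lemma fix_case n a b V V' N : IH n -> HV [] (TArr (TArr a b) (TArr a b)) V V' ->
  osc [] (TArr a b) (CFix V') N -> TS (Hc (TArr a b)) (atree (S n) [] (CFix V)) (otree [] N).
Proof.
  intros IHn H1 S.
  destruct (HV_ty _ _ _ _ _ _ _ _ H1) as [T1 T1'].
  destruct (canon_arr _ _ _ T1) as [B ->].
  destruct (canon_arr _ _ _ T1') as [B' ->].
  eapply (sil_case n _ _ (CApp (VLam (TArr a b) B) (fixbody Op a (VLam (TArr a b) B)))
             (CFix (VLam (TArr a b) B')) (CApp (VLam (TArr a b) B') (fixbody Op a (VLam (TArr a b) B')))); auto.
  - eapply Hc_app; eauto. unfold fixbody. apply Hc_lam. eapply Hc_let.
    + apply Hc_fix. apply (proj1 (H_ren Op ar O sem) _ _ _ _ H1). intros k c E; destruct k; discriminate.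
    + apply (proj2 (H_refl Op ar O sem)). econstructor; constructor; reflexivity.
  - constructor; auto.
  - apply osc_closed; exact S.
Qed.

Lemma case_case n t V V' M1 M1' K K' N : IH n -> HV [] TNat V V' -> HC [] t M1 M1' -> HC [TNat] t K K' ->
  osc [] t (CCase V' M1' K') N -> TS (Hc t) (atree (S n) [] (CCase V M1 K)) (otree [] N).
Proof.
  intros IHn H1 H2 H3 S.
  destruct (HV_ty _ _ _ _ _ _ _ _ H1) as [T1 T1'].
  destruct (osc_ty _ _ _ _ _ _ _ _ S) as [T3 T3'].
  apply H_nat in H1. subst V'.
  destruct V; try (eapply bott_case; [reflexivity|exact T3']).
  - eapply (sil_case n t _ M1 (CCase VZ M1' K') M1'); auto. apply osc_closed; exact S.
  - eapply (sil_case n t _ (subst0 K V) (CCase (VS V) M1' K') (subst0 K' V)); auto.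
    + eapply HC_subst0; eauto. apply (proj1 (H_refl Op ar O sem)). inversion T1; auto.
    + apply osc_closed; exact S.
Qed.

Lemma valid_fin s k i : ar s = AFin k \/ ar s = APFin k -> valid_child Op ar s i = true -> i < k.
Proof.
  intros E V. unfold valid_child, nchildren in V. destruct E as [E|E]; rewrite E in V;
  apply Nat.ltb_lt; auto.
Qed.

Lemma op_case n t s Ms Ns N : IH n -> ar s = AFin (length Ms) -> length Ns = length Ms ->
  (forall i, i < length Ms -> HC [] t (nth i Ms dft) (nth i Ns dft)) ->
  osc [] t (COp s Ns) N -> TS (Hc t) (atree (S n) [] (COp s Ms)) (otree [] N).
Proof.
  intros IHn E L H S. destruct (osc_ty _ _ _ _ _ _ _ _ S) as [T3 T3'].
  eapply (node_case n t _ (COp s Ns) N s None); [exact IHn|reflexivity|reflexivity| | |exact T3|apply osc_closed; exact S].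
  - unfold is_param. rewrite E. split; congruence.
  - intros i Vi. apply H. eapply valid_fin; eauto.
Qed.

Lemma opP_case n t s V V' Ms Ns N : IH n -> ar s = APFin (length Ms) -> HV [] TNat V V' ->
  length Ns = length Ms ->
  (forall i, i < length Ms -> HC [] t (nth i Ms dft) (nth i Ns dft)) ->
  osc [] t (COpP s V' Ns) N -> TS (Hc t) (atree (S n) [] (COpP s V Ms)) (otree [] N).
Proof.
  intros IHn E HVV L H S. destruct (osc_ty _ _ _ _ _ _ _ _ S) as [T3 T3'].
  apply H_nat in HVV. subst V'.
  destruct (val_num V) as [m|] eqn:Vn.
  - eapply (node_case n t _ (COpP s V Ns) N s (Some m)); [exact IHn| | | | |exact T3|apply osc_closed; exact S].
    + simpl. rewrite Vn. reflexivity.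
    + simpl. rewrite Vn. reflexivity.
    + unfold is_param. rewrite E. split; congruence.
    + intros i Vi. apply H. eapply valid_fin; eauto.
  - eapply bott_case; [simpl; rewrite Vn; reflexivity|exact T3'].
Qed.

Lemma opC_case n t s V V' N : IH n -> ar s = ACount -> HV [] (TArr TNat t) V V' ->
  osc [] t (COpC s V') N -> TS (Hc t) (atree (S n) [] (COpC s V)) (otree [] N).
Proof.
  intros IHn E HVV S. destruct (osc_ty _ _ _ _ _ _ _ _ S) as [T3 T3'].
  eapply (node_case n t _ (COpC s V') N s None); [exact IHn|reflexivity|reflexivity| | |exact T3|apply osc_closed; exact S].
  - unfold is_param. rewrite E. split; congruence.
  - intros i Vi. eapply Hc_app; eauto. apply (proj1 (H_refl Op ar O sem)). apply ty_weak0, ty_num.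
Qed.

Lemma opPC_case n t s V V' W W' N : IH n -> ar s = APCount -> HV [] TNat V V' ->
  HV [] (TArr TNat t) W W' ->
  osc [] t (COpPC s V' W') N -> TS (Hc t) (atree (S n) [] (COpPC s V W)) (otree [] N).
Proof.
  intros IHn E HVV HW S. destruct (osc_ty _ _ _ _ _ _ _ _ S) as [T3 T3'].
  apply H_nat in HVV. subst V'.
  destruct (val_num V) as [m|] eqn:Vn.
  - eapply (node_case n t _ (COpPC s V W') N s (Some m)); [exact IHn| | | | |exact T3|apply osc_closed; exact S].
    + simpl. rewrite Vn. reflexivity.
    + simpl. rewrite Vn. reflexivity.
    + unfold is_param. rewrite E. split; congruence.
    + intros i Vi. eapply Hc_app; eauto. apply (proj1 (H_refl Op ar O sem)). apply ty_weak0, ty_num.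
  - eapply bott_case; [simpl; rewrite Vn; reflexivity|exact T3'].
Qed.

Lemma key n : IH n.
Proof.
  induction n; intros t M N H.
  - destruct (HC_ty _ _ _ _ _ _ _ _ H) as [T1 T2].
    change (atree 0 [] M) with (bott Op (X := val)).
    apply (TS_bott Op ar O sem SO). eapply wfTo; eauto.
  - remember [] as G eqn:EG. destruct H; subst G.
    + eapply app_case; eauto.
    + eapply ret_case; eauto.
    + eapply let_case; eauto.
    + eapply fix_case; eauto.
    + eapply case_case; eauto.
    + eapply op_case; eauto.
    + eapply opP_case; eauto.
    + eapply opC_case; eauto.
    + eapply opPC_case; eauto.
Qed.

End Key.

Section Final.
Variable Op : Type.
Variable ar : Op -> arity.
Variable O : Type.
Variable sem : O -> rtree Op unit -> Prop.
Hypothesis SO : forall o, scott_open Op ar (sem o).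
Hypothesis DEC : decomposable Op ar O sem.

Notation val := (val Op). Notation comp := (comp Op).
Notation tyv := (tyv ar). Notation tyc := (tyc ar).
Notation rtree := (rtree Op).
Notation wf := (wf Op ar). Notation wfT := (wfT Op ar).
Notation otree := (otree Op ar). Notation atree := (atree Op ar).
Notation simv := (simv Op ar O sem). Notation simc := (simc Op ar O sem).
Notation osv := (openv Op ar simv). Notation osc := (openc Op ar simc).
Notation HV := (HV Op ar O sem). Notation HC := (HC Op ar O sem).
Notation dft := (@CRet Op VStar).

Lemma restrict_tle {X} (A : X -> Prop) (t t' : rtree X) :
  tle_cpo t t' -> tle_cpo (restrict A t) (restrict A t').
Proof.
  intros L p. unfold restrict. destruct (L p) as [E|[E|E]]; rewrite E; auto.
Qed.

Lemma restrict_pt {X} (A : X -> Prop) (t t' : rtree X) p :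
  t p = t' p -> restrict A t p = restrict A t' p.
Proof. intros E. unfold restrict. rewrite E. auto. Qed.

Lemma approx_modal t M A o : tyc [] M t -> modal Op O sem o A (optree ar M) ->
  exists n, modal Op O sem o A (atree n [] M).
Proof.
  intros T H. unfold modal in *.
  set (c := fun n => restrict A (atree n [] M)).
  destruct (proj2 (SO o) c (restrict A (optree ar M))) as [n Hn]; eauto.
  - intros n. unfold c. eapply wf_restrict. eapply wfa; eauto.
  - intros n. unfold c. apply restrict_tle. intros p. apply approx_mono.
  - eapply wf_restrict. eapply wfo; eauto.
  - split.
    + intros n. unfold c. apply restrict_tle. apply atree_le.
    + intros u Wu Hu p.
      destruct (otree [] M p) eqn:E.
      * right; right. unfold restrict. change (otree [] M p) with (optree ar M p) in E. rewrite E. auto.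
      * right; left. unfold restrict. change (otree [] M p) with (optree ar M p) in E. rewrite E. auto.
      * destruct (otree_inv Op ar [] M p) as [n Hn]; try congruence.
        rewrite <- (restrict_pt A (atree n [] M) (optree ar M) p Hn). apply Hu.
      * destruct (otree_inv Op ar [] M p) as [n Hn]; try congruence.
        rewrite <- (restrict_pt A (atree n [] M) (optree ar M) p Hn). apply Hu.
Qed.

Lemma howe_sim : simulation Op ar O sem (fun t V W => HV [] t V W) (fun t M N => HC [] t M N).
Proof.
  constructor.
  - intros t V W H. apply (HV_ty _ _ _ _ _ _ _ _ H).
  - intros t M N H. apply (HC_ty _ _ _ _ _ _ _ _ H).
  - intros V W H. apply H_nat in H; auto.
  - intros t M N H A HA o Ho.
    destruct (HC_ty _ _ _ _ _ _ _ _ H) as [T1 T2].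
    destruct (approx_modal t M A o T1 Ho) as [n Hn].
    apply (key Op ar O sem SO DEC n t M N H A o Hn).
  - intros t1 t V W H U HU. eapply Hc_app; eauto. apply (proj1 (H_refl Op ar O sem)); auto.
Qed.

Lemma HC_simc t M N : HC [] t M N -> simc t M N.
Proof. intros H. exists (fun t V W => HV [] t V W), (fun t M N => HC [] t M N). split; auto. apply howe_sim. Qed.
Lemma HV_simv t M N : HV [] t M N -> simv t M N.
Proof. intros H. exists (fun t V W => HV [] t V W), (fun t M N => HC [] t M N). split; auto. apply howe_sim. Qed.

Lemma sbH_refl G s : sb Op ar G [] s -> sbH Op ar O sem G [] s s.
Proof. intros H n a E. apply (proj1 (H_refl Op ar O sem)). auto. Qed.

Lemma HC_osc G t M N : HC G t M N -> osc G t M N.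
Proof.
  intros H. destruct (HC_ty _ _ _ _ _ _ _ _ H) as [T1 T2]. apply openc_iff.
  split; [auto|split; [auto|]]. intros s Hs. apply HC_simc.
  eapply (proj2 (H_sub Op ar O sem)); eauto. apply sbH_refl; auto.
Qed.
Lemma HV_osv G t M N : HV G t M N -> osv G t M N.
Proof.
  intros H. destruct (HV_ty _ _ _ _ _ _ _ _ H) as [T1 T2]. apply openv_iff.
  split; [auto|split; [auto|]]. intros s Hs. apply HV_simv.
  eapply (proj1 (H_sub Op ar O sem)); eauto. apply sbH_refl; auto.
Qed.

Lemma Forall2_nth' {A} (R : A -> A -> Prop) l1 l2 d :
  Forall2 R l1 l2 -> length l2 = length l1 /\ forall i, i < length l1 -> R (nth i l1 d) (nth i l2 d).
Proof.
  induction 1; simpl; split; auto.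
  - intros i Hi; lia.
  - destruct IHForall2; auto.
  - destruct IHForall2 as [_ H2]. intros [|i] Hi; auto. apply H2. lia.
Qed.

Lemma compat : compatible Op ar osv osc.
Proof.
  constructor.
  - intros G n t E. apply osv_refl. constructor; auto.
  - intros G. apply osv_refl. constructor.
  - intros G. apply osv_refl. constructor.
  - intros G V W H. apply HV_osv, Hc_succ, osv_H; auto.
  - intros G t r M N H. apply HV_osv, Hc_lam, osc_H; auto.
  - intros G t r V V' W W' H1 H2. apply HC_osc. eapply Hc_app; apply osv_H; eauto.
  - intros G t V W H. apply HC_osc. eapply Hc_ret; apply osv_H; eauto.
  - intros G t r M M' N N' H1 H2. apply HC_osc. eapply Hc_let; [apply osc_H|apply osc_H]; eauto.
  - intros G t r V W H. apply HC_osc. eapply Hc_fix; apply osv_H; eauto.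
  - intros G t V W M M' N N' H1 H2 H3. apply HC_osc. eapply Hc_case; [apply osv_H|apply osc_H|apply osc_H]; eauto.
  - intros G t s Ms Ns E H. destruct (Forall2_nth' _ _ _ dft H) as [L H'].
    apply HC_osc. apply Hc_op; auto. intros i Hi. apply osc_H; auto.
  - intros G t s V W Ms Ns E HV' H. destruct (Forall2_nth' _ _ _ dft H) as [L H'].
    apply HC_osc. apply Hc_opP; auto. apply osv_H; auto. intros i Hi. apply osc_H; auto.
  - intros G t s V W E H. apply HC_osc. apply Hc_opC; auto. apply osv_H; auto.
  - intros G t s V V' W W' E H1 H2. apply HC_osc. apply Hc_opPC; auto; apply osv_H; auto.
Qed.

End Final.

Theorem theorem3 (Op : Type) (ar : Op -> arity) (O : Type)
    (sem : O -> rtree Op unit -> Prop) :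
  (forall o : O, scott_open Op ar (sem o)) ->
  decomposable Op ar O sem ->
  compatible Op ar (openv Op ar (simv Op ar O sem)) (openc Op ar (simc Op ar O sem)).
Proof.
  intros SO DEC. apply compat; auto.
Qed.
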